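(* Introduce on $\mathbb R^2$ the coordinates $(\rho,\varphi)$ with $\varphi=2\pi t/T\in S^1$, $T=4\pi/f'(r_0)$, and $\rho\ge0$ defined by $\rho^2=4f(r)/f'(r_0)^2$, so that $\mathring g=\rho^2d\varphi^2+\frac{f'(r_0)^2}{f'(r(\rho))^2}d\rho^2+r(\rho)^2h_K$. Consider the one-parameter family $\mu\mapsto\mathring g_\mu$ of such metrics, written in the fixed coordinates $(\rho,\varphi,x)$ ($x\in N$), and the symmetric tensor $\frac{d\mathring g_\mu}{d\mu}$. Then $\frac{d\mathring g_\mu}{d\mu}\in L^2(M,\mathring g_\mu)$ if and only if $\frac{d}{d\mu}\big(f'(r_0)\big)=0$. This happens if and only if $K=1$ and $\mu=\mu_c:=\frac{n}{n+1}\big(\ell\sqrt{\tfrac{n-1}{n+1}}\big)^{n-1}$ (equivalently $r_0=\ell\sqrt{\frac{n-1}{n+1}}$); for $K\in\{0,-1\}$ the variation is never in $L^2$.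
   Context: Fix an integer $n\ge2$, constants $\ell>0$, $K\in\{-1,0,1\}$, $\mu\in\mathbb R$. Let $(N,h_K)$ be a closed $n$-dimensional Riemannian manifold of constant sectional curvature $K$. Set $f(r)=\frac{r^2}{\ell^2}+K-\frac{2\mu}{r^{n-1}}$. Assume $\mu>0$ if $K\in\{0,1\}$ and $\mu>\mu_{\min}:=-\frac{1}{n+1}\big(\frac{n+1}{\ell^2(n-1)}\big)^{\frac{1-n}{2}}$ if $K=-1$; then $f$ has a largest positive zero $r_0$ (depending on $\mu$), which is simple, and $f>0$, $f'>0$ on $(r_0,\infty)$. The Riemannian Kottler metric is $\mathring g=f(r)\,dt^2+f(r)^{-1}dr^2+r^2h_K$ on $M=\mathbb R^2\times N$, $r\in[r_0,\infty)$, $t$ periodic with period $4\pi/f'(r_0)$, $(r,t)$ polar-type coordinates on $\mathbb R^2$ centred at $r=r_0$. *)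

(* Defs.v *)
From Stdlib Require Import Reals Lra ZArith.
Open Scope R_scope.

(* Kottler data: n = dim N, l = AdS radius, K = curvature of N (as an integer), m = mass mu. *)

Definition kf (n : nat) (l : R) (K : Z) (m r : R) : R :=
  r ^ 2 / l ^ 2 + IZR K - 2 * m / r ^ (n - 1).

Definition kdf (n : nat) (l : R) (K : Z) (m r : R) : R :=
  2 * r / l ^ 2 + 2 * (INR n - 1) * m / r ^ n.

Definition mu_min (n : nat) (l : R) : R :=
  - (1 / (INR n + 1)) * Rpower ((INR n + 1) / (l ^ 2 * (INR n - 1))) ((1 - INR n) / 2).

Definition mu_c (n : nat) (l : R) : R :=
  INR n / (INR n + 1) * (l * sqrt ((INR n - 1) / (INR n + 1))) ^ (n - 1).

Definition admissible (n : nat) (l : R) (K : Z) (m : R) : Prop :=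
  ((K = 0%Z \/ K = 1%Z) -> 0 < m) /\ (K = (-1)%Z -> mu_min n l < m).

Definition is_r0 (n : nat) (l : R) (K : Z) (m r0 : R) : Prop :=
  0 < r0 /\ kf n l K m r0 = 0 /\ (forall r, r0 < r -> kf n l K m r <> 0).

(* Component g_{rho rho} = f'(r0)^2 / f'(r(rho))^2 of the metric
   g_mu = rho^2 dphi^2 + g_{rho rho} drho^2 + r(rho)^2 h_K,
   where R0 m = r0(mu=m) and Rr m rho = r(rho) for mass m. *)
Definition g_rr (n : nat) (l : R) (K : Z) (R0 : R -> R) (Rr : R -> R -> R)
  (m rho : R) : R :=
  (kdf n l K m (R0 m)) ^ 2 / (kdf n l K m (Rr m rho)) ^ 2.

Definition g_N (Rr : R -> R -> R) (m rho : R) : R := (Rr m rho) ^ 2.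

(* Pointwise squared g-norm |k|^2_g of k = kr drho^2 + kN h_K (k_{phi phi} = 0,
   since g_{phi phi} = rho^2 is mu-independent), times the Riemannian volume
   density rho * sqrt(g_rr) * r^n (w.r.t. drho dphi dvol_{h_K}). *)
Definition L2_density (n : nat) (l : R) (K : Z) (R0 : R -> R) (Rr : R -> R -> R)
  (m : R) (kr kN : R -> R) (rho : R) : R :=
  ((kr rho / g_rr n l K R0 Rr m rho) ^ 2
     + INR n * (kN rho / g_N Rr m rho) ^ 2)
  * (rho * sqrt (g_rr n l K R0 Rr m rho) * (Rr m rho) ^ n).

Definition finite_integral_0_inf (h : R -> R) : Prop :=
  (forall b, 0 <= b -> inhabited (Riemann_integrable h 0 b)) /\
  exists C, forall b (pr : Riemann_integrable h 0 b), 0 <= b -> RiemannInt pr <= C.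

(* dg_mu/dmu (with radial components kr, kN) lies in L^2(M, g_mu).
   The integrand is independent of (phi, x), so the integral over
   M = R^2 x N equals 2*pi*Vol(N, h_K) times the radial integral. *)
Definition variation_in_L2 (n : nat) (l : R) (K : Z) (R0 : R -> R) (Rr : R -> R -> R)
  (m : R) (kr kN : R -> R) : Prop :=
  finite_integral_0_inf (L2_density n l K R0 Rr m kr kN).

(* Main.v *)
Require Import Defs.
From Stdlib Require Import Reals Lra Lia ZArith.
From Coquelicot Require Import Coquelicot.
Open Scope R_scope.

Definition cont_at (f : R -> R) (x0 : R) : Prop :=
  forall eps, 0 < eps -> exists delta, 0 < delta /\
    forall x, Rabs (x - x0) < delta -> Rabs (f x - f x0) < eps.

Lemma quot_close q c d D0 a b :
  D0 <> 0 -> Rabs (q - c) <= a -> Rabs (d - D0) <= b -> b <= Rabs D0 / 2 ->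
  Rabs (q / d - c / D0) <= 2 * (a * Rabs D0 + Rabs c * b) / (Rabs D0 * Rabs D0).
Proof.
  intros HD Hq Hd Hb.
  assert (HA : 0 < Rabs D0) by (apply Rabs_pos_lt; auto).
  assert (Hdd : Rabs D0 / 2 <= Rabs d).
  { pose proof (Rabs_triang_inv D0 d). rewrite Rabs_minus_sym in Hd. lra. }
  assert (Hd0 : d <> 0) by (intro E; rewrite E, Rabs_R0 in Hdd; lra).
  replace (q / d - c / D0) with (((q - c) * D0 + c * (D0 - d)) / (d * D0)) by (field; auto).
  unfold Rdiv. rewrite Rabs_mult, Rabs_inv, Rabs_mult.
  assert (HN : Rabs ((q - c) * D0 + c * (D0 - d)) <= a * Rabs D0 + Rabs c * b).
  { eapply Rle_trans; [apply Rabs_triang|]. rewrite !Rabs_mult.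
    rewrite (Rabs_minus_sym D0 d).
    pose proof (Rabs_pos (q - c)). pose proof (Rabs_pos c).
    apply Rplus_le_compat; [apply Rmult_le_compat_r; lra| apply Rmult_le_compat_l; lra]. }
  assert (0 < Rabs d * Rabs D0) by (apply Rmult_lt_0_compat; lra).
  apply (Rle_trans _ ((a * Rabs D0 + Rabs c * b) * / (Rabs d * Rabs D0))).
  - apply Rmult_le_compat_r; [left; apply Rinv_0_lt_compat; auto| auto].
  - assert (0 <= a * Rabs D0 + Rabs c * b) by (pose proof (Rabs_pos (q - c)); pose proof (Rabs_pos (d - D0)); pose proof (Rabs_pos c); nra).
    replace (2 * (a * Rabs D0 + Rabs c * b) * / (Rabs D0 * Rabs D0)) with
      ((a * Rabs D0 + Rabs c * b) * / (Rabs D0 / 2 * Rabs D0)) by (field; lra).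
    apply Rmult_le_compat_l; auto.
    apply Rinv_le_contravar; [nra|]. apply Rmult_le_compat_r; lra.
Qed.

Lemma IFT (H D : R -> R -> R) (r : R -> R) (m0 c : R) :
  (exists d1, 0 < d1 /\ forall m, Rabs (m - m0) < d1 -> H m (r m) = 0) ->
  cont_at r m0 ->
  derivable_pt_lim (fun m => H m (r m0)) m0 c ->
  (exists d2, 0 < d2 /\ forall m x, Rabs (m - m0) < d2 -> Rabs (x - r m0) < d2 ->
      derivable_pt_lim (H m) x (D m x)) ->
  (forall eps, 0 < eps -> exists d, 0 < d /\ forall m x, Rabs (m - m0) < d ->
      Rabs (x - r m0) < d -> Rabs (D m x - D m0 (r m0)) < eps) ->
  D m0 (r m0) <> 0 ->
  derivable_pt_lim r m0 (- c / D m0 (r m0)).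
Proof.
  intros [d1 [Hd1 Hroot]] Hr Hc [d2 [Hd2 Hder]] HDc HD0 eps Heps.
  set (D0 := D m0 (r m0)) in *.
  assert (HA : 0 < Rabs D0) by (apply Rabs_pos_lt; auto).
  set (a := eps * Rabs D0 / 8).
  assert (Ha : 0 < a) by (unfold a; apply Rdiv_lt_0_compat; [apply Rmult_lt_0_compat|]; lra).
  set (b := Rmin (Rabs D0 / 2) (eps * (Rabs D0 * Rabs D0) / (4 * (Rabs c + 1)))).
  assert (Hc1 : 0 < Rabs c + 1) by (pose proof (Rabs_pos c); lra).
  assert (Hb : 0 < b).
  { unfold b; apply Rmin_glb_lt; [lra|]. apply Rdiv_lt_0_compat; [|lra].
    apply Rmult_lt_0_compat; [lra| apply Rmult_lt_0_compat; lra]. }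
  destruct (Hc a Ha) as [dh Hdh].
  destruct (HDc b Hb) as [dD [HdD HD]].
  destruct (Hr (Rmin dD d2)) as [dr [Hdr Hrr]]; [apply Rmin_glb_lt; lra|].
  assert (Hdel : 0 < Rmin (Rmin dh d1) (Rmin (Rmin d2 dD) dr)).
  { destruct dh as [dh Hdh0]; simpl. repeat apply Rmin_glb_lt; lra. }
  exists (mkposreal _ Hdel). intros h Hh0 Hh. simpl in Hh.
  assert (Hh1 : Rabs h < dh) by (eapply Rlt_le_trans; [apply Hh|]; eapply Rle_trans; apply Rmin_l).
  assert (Hh2 : Rabs h < d1) by (eapply Rlt_le_trans; [apply Hh|]; eapply Rle_trans; [apply Rmin_l| apply Rmin_r]).
  assert (Hh3 : Rabs h < d2) by (eapply Rlt_le_trans; [apply Hh|]; eapply Rle_trans; [apply Rmin_r|]; eapply Rle_trans; apply Rmin_l).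
  assert (Hh4 : Rabs h < dD) by (eapply Rlt_le_trans; [apply Hh|]; eapply Rle_trans; [apply Rmin_r|]; eapply Rle_trans; [apply Rmin_l| apply Rmin_r]).
  assert (Hh5 : Rabs h < dr) by (eapply Rlt_le_trans; [apply Hh|]; eapply Rle_trans; apply Rmin_r).
  set (m := m0 + h).
  assert (Hmm : Rabs (m - m0) = Rabs h) by (unfold m; f_equal; ring).
  specialize (Hrr m ltac:(rewrite Hmm; auto)).
  assert (Hrm1 : Rabs (r m - r m0) < dD) by (eapply Rlt_le_trans; [apply Hrr| apply Rmin_l]).
  assert (Hrm2 : Rabs (r m - r m0) < d2) by (eapply Rlt_le_trans; [apply Hrr| apply Rmin_r]).
  assert (Hxi : exists xi, Rabs (xi - r m0) <= Rabs (r m - r m0) /\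
             H m (r m) - H m (r m0) = D m xi * (r m - r m0)).
  { destruct (Rtotal_order (r m) (r m0)) as [Hlt|[Heq|Hgt]].
    - destruct (MVT_cor2 (H m) (D m) (r m) (r m0) Hlt) as [xi [E Hxi]].
      + intros x Hx. apply Hder; [rewrite Hmm; auto|].
        apply (Rle_lt_trans _ (Rabs (r m - r m0))); auto.
        rewrite !Rabs_left1 by lra. lra.
      + exists xi. split.
        * rewrite (Rabs_left1 (r m - r m0)) by lra. rewrite Rabs_left1 by lra. lra.
        * replace (H m (r m) - H m (r m0)) with (- (H m (r m0) - H m (r m))) by ring.
          rewrite E. ring.
    - exists (r m0). rewrite Heq. split; [right; reflexivity| ring].
    - destruct (MVT_cor2 (H m) (D m) (r m0) (r m) Hgt) as [xi [E Hxi]].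
      + intros x Hx. apply Hder; [rewrite Hmm; auto|].
        apply (Rle_lt_trans _ (Rabs (r m - r m0))); auto.
        rewrite !Rabs_pos_eq by lra. lra.
      + exists xi. split.
        * rewrite (Rabs_pos_eq (r m - r m0)) by lra. rewrite Rabs_pos_eq by lra. lra.
        * rewrite E. ring. }
  destruct Hxi as [xi [Hxi E]].
  specialize (Hdh h Hh0 Hh1). simpl in Hdh.
  rewrite (Hroot m0) in Hdh by (rewrite Rminus_diag, Rabs_R0; lra).
  fold m in Hdh. rewrite (Hroot m) in E by (rewrite Hmm; auto).
  set (q := (H m (r m0) - 0) / h) in *.
  assert (HDxi : Rabs (D m xi - D0) < b).
  { apply HD; [rewrite Hmm; auto| lra]. }
  assert (Hqr : (r m - r m0) / h = - q / D m xi).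
  { assert (Hdx : D m xi <> 0).
    { intro Z. rewrite Z in HDxi. unfold Rminus in HDxi. rewrite Rplus_0_l, Rabs_Ropp in HDxi.
      pose proof (Rmin_l (Rabs D0 / 2) (eps * (Rabs D0 * Rabs D0) / (4 * (Rabs c + 1)))). fold b in H0. lra. }
    assert (E2 : r m - r m0 = - H m (r m0) / D m xi).
    { apply (Rmult_eq_reg_l (D m xi)); [|auto]. field_simplify; [|auto]. lra. }
    rewrite E2. unfold q. field. split; auto. }
  fold m. rewrite Hqr.
  replace (- q / D m xi - - c / D0) with (- (q / D m xi - c / D0)) by (unfold Rdiv; ring).
  rewrite Rabs_Ropp.
  assert (Hbb : b <= Rabs D0 / 2) by apply Rmin_l.
  assert (Hbb2 : b <= eps * (Rabs D0 * Rabs D0) / (4 * (Rabs c + 1))) by apply Rmin_r.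
  pose proof (quot_close q c (D m xi) D0 a b HD0 ltac:(lra) ltac:(lra) Hbb) as Hqc.
  eapply Rle_lt_trans; [apply Hqc|].
  assert (HA2 : 0 < Rabs D0 * Rabs D0) by (apply Rmult_lt_0_compat; lra).
  apply (Rmult_lt_reg_r (Rabs D0 * Rabs D0)); auto.
  unfold Rdiv at 1. rewrite Rmult_assoc, Rinv_l, Rmult_1_r by lra.
  assert (Hcb : Rabs c * b <= eps * (Rabs D0 * Rabs D0) / 4).
  { apply (Rle_trans _ ((Rabs c + 1) * b)).
    - pose proof (Rabs_pos c). nra.
    - apply (Rmult_le_reg_l (/ (Rabs c + 1))); [apply Rinv_0_lt_compat; lra|].
      rewrite <- Rmult_assoc, Rinv_l, Rmult_1_l by lra.
      replace (/ (Rabs c + 1) * (eps * (Rabs D0 * Rabs D0) / 4)) with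
        (eps * (Rabs D0 * Rabs D0) / (4 * (Rabs c + 1))) by (field; lra). lra. }
  unfold a. nra.
Qed.

Lemma root_cont (H : R -> R -> R) (a r : R -> R) (m0 : R) :
  (exists d, 0 < d /\ forall m, Rabs (m - m0) < d ->
      H m (r m) = 0 /\ a m <= r m /\ (forall x y, a m <= x -> x < y -> H m x < H m y)) ->
  cont_at a m0 ->
  (forall x, cont_at (fun m => H m x) m0) ->
  cont_at r m0.
Proof.
  intros [d0 [Hd0 Hp]] Ha HH eps Heps.
  destruct (Hp m0) as [Hr0 [Har0 Hinc0]]; [rewrite Rminus_diag, Rabs_R0; lra|].
  set (x0 := r m0) in *.
  assert (Hu : 0 < H m0 (x0 + eps)) by (rewrite <- Hr0; apply Hinc0; lra).
  destruct (HH (x0 + eps) _ Hu) as [du [Hdu Hu']]. simpl in Hu'.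
  destruct (Ha eps Heps) as [da [Hda Ha']].
  assert (Hl : exists dl, 0 < dl /\ forall m, Rabs (m - m0) < dl -> Rabs (m - m0) < d0 -> x0 - eps < r m).
  { destruct (Rlt_or_le (x0 - eps) (a m0)) as [Hlt|Hle].
    - destruct (Ha (a m0 - (x0 - eps))) as [d' [Hd' Ha'']]; [lra|].
      exists d'. split; auto. intros m Hm Hm0. specialize (Ha'' m Hm).
      destruct (Hp m Hm0) as [_ [Ham _]]. apply Rabs_def2 in Ha''. lra.
    - assert (Hneg : H m0 (x0 - eps) < 0) by (rewrite <- Hr0; apply Hinc0; lra).
      destruct (HH (x0 - eps) (- H m0 (x0 - eps))) as [d' [Hd' Hl']]; [lra|].
      exists d'. split; auto. intros m Hm Hm0. specialize (Hl' m Hm). simpl in Hl'.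
      apply Rabs_def2 in Hl'.
      destruct (Hp m Hm0) as [Hrm [Ham Hinc]].
      destruct (Rlt_or_le (x0 - eps) (r m)) as [Hok|Hbad]; auto. exfalso.
      destruct Hbad as [Hbad|Hbad].
      + pose proof (Hinc (r m) (x0 - eps) Ham Hbad). lra.
      + rewrite Hbad in Hrm. lra. }
  destruct Hl as [dl [Hdl Hl]].
  exists (Rmin (Rmin d0 du) (Rmin da dl)). split.
  { repeat apply Rmin_glb_lt; lra. }
  intros m Hm.
  assert (Hm0 : Rabs (m - m0) < d0) by (eapply Rlt_le_trans; [apply Hm|]; eapply Rle_trans; apply Rmin_l).
  assert (Hm1 : Rabs (m - m0) < du) by (eapply Rlt_le_trans; [apply Hm|]; eapply Rle_trans; [apply Rmin_l|apply Rmin_r]).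
  assert (Hm2 : Rabs (m - m0) < da) by (eapply Rlt_le_trans; [apply Hm|]; eapply Rle_trans; [apply Rmin_r|apply Rmin_l]).
  assert (Hm3 : Rabs (m - m0) < dl) by (eapply Rlt_le_trans; [apply Hm|]; eapply Rle_trans; apply Rmin_r).
  pose proof (Hl m Hm3 Hm0) as Hlow.
  destruct (Hp m Hm0) as [Hrm [Ham Hinc]].
  specialize (Hu' m Hm1). apply Rabs_def2 in Hu'.
  specialize (Ha' m Hm2). apply Rabs_def2 in Ha'.
  assert (Hup : r m < x0 + eps).
  { destruct (Rlt_or_le (r m) (x0 + eps)) as [Hok|Hbad]; auto. exfalso.
    destruct Hbad as [Hbad|Hbad].
    - pose proof (Hinc (x0 + eps) (r m) ltac:(lra) Hbad). lra.
    - rewrite Hbad in Hu'. lra. }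
  apply Rabs_def1; lra.
Qed.

Ltac nzt := repeat split; try apply pow_nonzero; try lra.

Lemma div_lt_helper a P c : 0 < P -> a < c * P -> a / P < c.
Proof. intros HP H. apply (Rmult_lt_reg_r P); auto. unfold Rdiv. rewrite Rmult_assoc, Rinv_l, Rmult_1_r; lra. Qed.

Lemma min3_lt x a b c : Rabs x < Rmin (Rmin a b) c -> Rabs x < a /\ Rabs x < b /\ Rabs x < c.
Proof.
  intros H. pose proof (Rmin_l (Rmin a b) c). pose proof (Rmin_r (Rmin a b) c).
  pose proof (Rmin_l a b). pose proof (Rmin_r a b). repeat split; lra.
Qed.

Lemma cpt_plus f g x : continuity_pt f x -> continuity_pt g x -> continuity_pt (fun y => f y + g y) x.
Proof. intros; apply (continuity_pt_plus f g); auto. Qed.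
Lemma cpt_minus f g x : continuity_pt f x -> continuity_pt g x -> continuity_pt (fun y => f y - g y) x.
Proof. intros; apply (continuity_pt_minus f g); auto. Qed.
Lemma cpt_mult f g x : continuity_pt f x -> continuity_pt g x -> continuity_pt (fun y => f y * g y) x.
Proof. intros; apply (continuity_pt_mult f g); auto. Qed.
Lemma cpt_div f g x : continuity_pt f x -> continuity_pt g x -> g x <> 0 -> continuity_pt (fun y => f y / g y) x.
Proof. intros; apply (continuity_pt_div f g); auto. Qed.
Lemma cpt_const (c x : R) : continuity_pt (fun _ => c) x.
Proof. apply continuity_pt_const. intros a b; reflexivity. Qed.
Lemma cpt_id x : continuity_pt (fun y => y) x.
Proof. apply derivable_continuous_pt. exists 1. apply derivable_pt_lim_id. Qed.
Lemma cpt_pow f k x : continuity_pt f x -> continuity_pt (fun y => f y ^ k) x.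
Proof.
  intros H. apply (continuity_pt_comp f (fun y => y ^ k)); auto.
  apply derivable_continuous_pt. exists (INR k * f x ^ Init.Nat.pred k). apply derivable_pt_lim_pow.
Qed.
Lemma cpt_abs f x : continuity_pt f x -> continuity_pt (fun y => Rabs (f y)) x.
Proof. intros H. apply (continuity_pt_comp f Rabs); auto. apply Rcontinuity_abs. Qed.

Ltac cpt_auto :=
  repeat first [ apply cpt_const | apply cpt_id | apply cpt_abs | apply cpt_pow | apply cpt_div
               | apply cpt_minus | apply cpt_plus | apply cpt_mult | assumption ].

Lemma fi_ext h1 h2 : (forall x, 0 <= x -> h1 x = h2 x) ->
  (forall b, 0 <= b -> inhabited (Riemann_integrable h1 0 b)) /\
  (exists C, forall b (pr : Riemann_integrable h1 0 b), 0 <= b -> RiemannInt pr <= C) ->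
  (forall b, 0 <= b -> inhabited (Riemann_integrable h2 0 b)) /\
  (exists C, forall b (pr : Riemann_integrable h2 0 b), 0 <= b -> RiemannInt pr <= C).
Proof.
  intros E [H1 [C H2]]. split.
  - intros b Hb. destruct (H1 b Hb) as [pr].
    assert (Hext : forall x, Rmin 0 b <= x <= Rmax 0 b -> h1 x = h2 x).
    { intros x Hx. apply E. rewrite Rmin_left in Hx by lra. lra. }
    exact (inhabits (Stdlib.Reals.RiemannInt.Riemann_integrable_ext h2 Hext pr)).
  - exists C. intros b pr Hb. destruct (H1 b Hb) as [pr1].
    rewrite <- (RiemannInt_P18 pr1 pr Hb). { apply H2; auto. }
    intros x Hx. apply E. lra.
Qed.

Lemma dpl_minus_const g C x L : derivable_pt_lim g x L -> derivable_pt_lim (fun y => g y - C) x L.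
Proof.
  intros H eps He. destruct (H eps He) as [d Hd]. exists d. intros h Hh Hh'.
  replace ((g (x + h) - C - (g x - C)) / h) with ((g (x + h) - g x) / h) by (field; auto).
  apply Hd; auto.
Qed.

Lemma abs_div_le a P P0 : 0 < P0 -> P0 <= P -> Rabs (a / P) <= Rabs a / P0.
Proof.
  intros H0 H1. unfold Rdiv. rewrite Rabs_mult, Rabs_inv, (Rabs_pos_eq P) by lra.
  apply Rmult_le_compat_l; [apply Rabs_pos|]. apply Rinv_le_contravar; lra.
Qed.

Lemma div_le_helper a P c : 0 < P -> a <= c * P -> a / P <= c.
Proof. intros HP H. apply (Rmult_le_reg_r P); auto. unfold Rdiv. rewrite Rmult_assoc, Rinv_l, Rmult_1_r; lra. Qed.

Lemma le_div_helper a P c : 0 < P -> c * P <= a -> c <= a / P.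
Proof. intros HP H. apply (Rmult_le_reg_r P); auto. unfold Rdiv. rewrite Rmult_assoc, Rinv_l, Rmult_1_r; lra. Qed.

Lemma cont_at_of_pt f x0 : continuity_pt f x0 -> cont_at f x0.
Proof.
  intros H eps Heps. destruct (H eps Heps) as [d [Hd Hx]].
  exists d; split; auto. intros x Hxd.
  destruct (Req_dec x x0) as [->|Hne].
  - rewrite Rminus_eq_0, Rabs_R0; lra.
  - apply (Hx x). split; [split; [exact I| auto]|]. exact Hxd.
Qed.

Lemma pt_of_cont_at f x0 : cont_at f x0 -> continuity_pt f x0.
Proof.
  intros H eps Heps. destruct (H eps Heps) as [d [Hd Hx]].
  exists d; split; auto. intros x [_ Hxd]. apply Hx. exact Hxd.
Qed.

Lemma pow_Sn_pred (n : nat) (x : R) : (1 <= n)%nat -> x ^ n = x * x ^ (n - 1).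
Proof. intros H; destruct n; [lia|]. simpl. now rewrite Nat.sub_0_r. Qed.

Lemma kf_deriv n l K m x : (2 <= n)%nat -> 0 < l -> 0 < x ->
  derivable_pt_lim (fun r => kf n l K m r) x (kdf n l K m x).
Proof.
  intros Hn Hl Hx. apply is_derive_Reals. unfold kf, kdf.
  destruct n as [|[|j]]; try lia.
  replace (S (S j) - 1)%nat with (S j) by lia.
  auto_derive.
  - apply Rmult_integral_contrapositive; split; [lra| apply pow_nonzero; lra].
  - change (pred (S j)) with j. rewrite !S_INR. rewrite <- !tech_pow_Rmult.
    assert (x ^ j <> 0) by (apply pow_nonzero; lra).
    change (match j with 0%nat => 1 | S _ => INR j + 1 end) with (INR (S j)).
    rewrite S_INR. field. repeat split; lra.
Qed.

Lemma int_inv_sq C b : 0 <= C -> 0 <= b ->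
  forall pr : Riemann_integrable (fun t => C / (1 + t) ^ 2) 0 b, RiemannInt pr <= C.
Proof.
  intros HC Hb pr. rewrite <- RInt_Reals.
  assert (H : is_RInt (fun t => C / (1 + t) ^ 2) 0 b (minus ((fun t => - C / (1 + t)) b) ((fun t => - C / (1 + t)) 0))).
  { apply (is_RInt_derive (fun t => - C / (1 + t)) (fun t => C / (1 + t) ^ 2)).
    - intros x Hx. rewrite Rmin_left, Rmax_right in Hx by lra.
      auto_derive; [lra|]. field. lra.
    - intros x Hx. rewrite Rmin_left, Rmax_right in Hx by lra.
      apply continuity_pt_filterlim. apply cpt_div; [apply cpt_const| apply cpt_pow; apply cpt_plus; [apply cpt_const| apply cpt_id]|].
      apply pow_nonzero. lra. }
  rewrite (is_RInt_unique _ _ _ _ H). simpl. unfold minus, plus, opp. simpl.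
  assert (0 <= C / (1 + b)) by (apply Rdiv_le_0_compat; lra).
  replace (- C / (1 + b) + - (- C / (1 + 0))) with (C - C / (1 + b)) by (field; lra).
  lra.
Qed.

Lemma le_div2 a P c : 0 < P -> a * P <= c -> a <= c / P.
Proof. intros HP H. apply (Rmult_le_reg_r P); auto. unfold Rdiv. rewrite Rmult_assoc, Rinv_l, Rmult_1_r; lra. Qed.

Section Kottler.
Variables (n : nat) (l : R) (K : Z).
Hypothesis Hn : (2 <= n)%nat.
Hypothesis Hl : 0 < l.
Hypothesis HK : K = (-1)%Z \/ K = 0%Z \/ K = 1%Z.

Local Notation f := (kf n l K).
Local Notation df := (kdf n l K).

Lemma INRn_ge2 : 2 <= INR n.
Proof. replace 2 with (INR 2) by (simpl; ring). apply le_INR; lia. Qed.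

Lemma IZRK_bounds : -1 <= IZR K <= 1.
Proof. destruct HK as [H|[H|H]]; rewrite H; simpl; lra. Qed.

Lemma INR_n1 : INR (n - 1) = INR n - 1.
Proof. rewrite minus_INR by lia. simpl; ring. Qed.

Lemma f_deriv m x : 0 < x -> derivable_pt_lim (f m) x (df m x).
Proof. intros; apply kf_deriv; auto. Qed.

Lemma f_cont m x : 0 < x -> continuity_pt (f m) x.
Proof.
  intros Hx. apply derivable_continuous_pt. exists (df m x). apply f_deriv; auto.
Qed.

Lemma df_cont m x : 0 < x -> continuity_pt (df m) x.
Proof.
  intros Hx. apply continuity_pt_filterlim. apply (ex_derive_continuous (V:=R_NormedModule)).
  unfold kdf. auto_derive. apply pow_nonzero; lra.
Qed.

Lemma f_big m C : exists X0, 0 < X0 /\ forall X, X0 <= X -> C < f m X.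
Proof.
  exists (1 + l * (2 + Rabs C + 2 * Rabs m)).
  assert (0 <= Rabs C) by apply Rabs_pos. assert (0 <= Rabs m) by apply Rabs_pos.
  split. { assert (0 < l * (2 + Rabs C + 2 * Rabs m)) by (apply Rmult_lt_0_compat; lra). lra. }
  intros X HX.
  assert (Hl2 : l * (2 + Rabs C + 2 * Rabs m) >= 0) by (apply Rle_ge, Rmult_le_pos; lra).
  assert (HX1 : 1 <= X) by lra.
  assert (HP : 1 <= X ^ (n - 1)) by (apply pow_R1_Rle; lra).
  assert (Ht : 2 + Rabs C + 2 * Rabs m <= X / l).
  { apply (Rmult_le_reg_l l); auto. field_simplify; lra. }
  assert (Hsq : X / l <= X ^ 2 / l ^ 2).
  { replace (X ^ 2 / l ^ 2) with ((X / l) * (X / l)) by (field; lra).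
    assert (1 <= X / l) by lra. nra. }
  assert (Hm : 2 * m / X ^ (n - 1) <= 2 * Rabs m).
  { unfold Rdiv. apply (Rmult_le_reg_r (X ^ (n - 1))); [lra|].
    rewrite Rmult_assoc, Rinv_l by lra.
    assert (m <= Rabs m) by apply Rle_abs. nra. }
  pose proof IZRK_bounds. unfold kf.
  assert (C <= Rabs C) by apply Rle_abs. lra.
Qed.

Lemma f_pos_beyond m r0 x : is_r0 n l K m r0 -> r0 < x -> 0 < f m x.
Proof.
  intros [Hr0 [Hf0 Hnz]] Hx.
  destruct (Rtotal_order 0 (f m x)) as [H|[H|H]]; auto.
  - exfalso. apply (Hnz x Hx). auto.
  - exfalso. destruct (f_big m 0) as [X0 [HX0 HX]].
    set (X := Rmax (x + 1) X0).
    assert (Hxx : x < X) by (unfold X; pose proof (Rmax_l (x+1) X0); lra).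
    assert (HfX : 0 < f m X) by (apply HX; unfold X; apply Rmax_r).
    destruct (Ranalysis5.IVT_interv (f m) x X) as [z [Hz Hfz]]; auto.
    + intros a Ha. apply f_cont. lra.
    + apply (Hnz z); [lra | auto].
Qed.

Lemma root_identity m r : 0 < r -> f m r = 0 ->
  2 * m = r ^ (n - 1) * (r ^ 2 / l ^ 2 + IZR K).
Proof.
  intros Hr Hf. unfold kf in Hf.
  assert (0 < r ^ (n - 1)) by (apply pow_lt; auto).
  replace (2 * m) with ((2 * m / r ^ (n - 1)) * r ^ (n - 1)) by (field; lra).
  replace (2 * m / r ^ (n - 1)) with (r ^ 2 / l ^ 2 + IZR K) by lra. ring.
Qed.

Lemma df_at_root m r : 0 < r -> f m r = 0 ->
  df m r * r = (INR n + 1) * r ^ 2 / l ^ 2 + (INR n - 1) * IZR K.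
Proof.
  intros Hr Hf. pose proof (root_identity m r Hr Hf) as Hm.
  unfold kdf. rewrite (pow_Sn_pred n r) by lia.
  assert (0 < r ^ (n - 1)) by (apply pow_lt; auto).
  assert (Hm' : m = r ^ (n - 1) * (r ^ 2 / l ^ 2 + IZR K) / 2) by lra.
  rewrite Hm'. field. lra.
Qed.


Lemma mu_min_val r : 0 < r -> (INR n + 1) * r ^ 2 = (INR n - 1) * l ^ 2 ->
  mu_min n l = - r ^ (n - 1) / (INR n + 1).
Proof.
  intros Hr Hrel. pose proof INRn_ge2.
  unfold mu_min.
  assert (Hb : (INR n + 1) / (l ^ 2 * (INR n - 1)) = / r ^ 2).
  { assert (0 < l ^ 2) by (apply pow_lt; auto). assert (0 < r ^ 2) by (apply pow_lt; auto).
    field_simplify_eq; [|repeat split; lra]. nra. }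
  rewrite Hb. unfold Rpower.
  rewrite ln_Rinv by (apply pow_lt; auto). rewrite ln_pow by auto.
  replace ((1 - INR n) / 2 * - (INR 2 * ln r)) with (INR (n - 1) * ln r)
    by (rewrite INR_n1; simpl; field).
  fold (Rpower r (INR (n - 1))). rewrite Rpower_pow by auto. field. lra.
Qed.

Lemma df_root_nonneg m r0 : is_r0 n l K m r0 -> 0 <= df m r0.
Proof.
  intros Hr. destruct (Rle_or_lt 0 (df m r0)) as [H|H]; auto. exfalso.
  pose proof Hr as [Hr0 [Hf0 _]].
  destruct (f_deriv m r0 Hr0 (- df m r0 / 2)) as [d Hd]; [lra|].
  set (h := Rmin (d / 2) 1).
  assert (Hh : 0 < h) by (unfold h; apply Rmin_glb_lt; [destruct d; simpl; lra | lra]).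
  assert (Hhd : h < d) by (unfold h; pose proof (Rmin_l (d/2) 1); destruct d; simpl in *; lra).
  specialize (Hd h ltac:(lra) ltac:(rewrite Rabs_pos_eq; lra)).
  pose proof (f_pos_beyond m r0 (r0 + h) Hr ltac:(lra)).
  rewrite Hf0, Rminus_0_r in Hd.
  assert (0 < f m (r0 + h) / h) by (apply Rdiv_lt_0_compat; auto).
  apply Rabs_def2 in Hd. lra.
Qed.

Definition adm m := admissible n l K m.

Lemma df_root_pos m r0 : adm m -> is_r0 n l K m r0 -> 0 < df m r0.
Proof.
  intros Ha Hr. pose proof (df_root_nonneg m r0 Hr) as H0.
  destruct H0 as [H0|H0]; auto. exfalso.
  pose proof Hr as [Hr0 [Hf0 _]]. pose proof INRn_ge2.
  pose proof (df_at_root m r0 Hr0 Hf0) as Hd. rewrite <- H0, Rmult_0_l in Hd.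
  assert (0 < r0 ^ 2 / l ^ 2) by (apply Rdiv_lt_0_compat; apply pow_lt; auto).
  destruct HK as [HK1|[HK1|HK1]]; rewrite HK1 in Hd.
  -
    assert (Hrel : (INR n + 1) * r0 ^ 2 = (INR n - 1) * l ^ 2).
    { assert (0 < l ^ 2) by (apply pow_lt; auto).
      apply (Rmult_eq_reg_r (/ l ^ 2)); [|apply Rinv_neq_0_compat; lra].
      replace ((INR n - 1) * l ^ 2 * / l ^ 2) with (INR n - 1) by (field; lra).
      replace ((INR n + 1) * r0 ^ 2 * / l ^ 2) with ((INR n + 1) * r0 ^ 2 / l ^ 2) by (field; lra).
      lra. }
    pose proof (mu_min_val r0 Hr0 Hrel) as Hmm.
    pose proof (root_identity m r0 Hr0 Hf0) as Hm. rewrite HK1 in Hm.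
    destruct Ha as [_ Ha]. specialize (Ha HK1).
    assert (Hs : r0 ^ 2 / l ^ 2 = (INR n - 1) / (INR n + 1)).
    { assert (0 < l ^ 2) by (apply pow_lt; auto).
      field_simplify_eq; [|lra]. nra. }
    rewrite Hs in Hm.
    assert (m = - r0 ^ (n - 1) / (INR n + 1)).
    { apply (Rmult_eq_reg_l 2); [|lra]. rewrite Hm. field. lra. }
    lra.
  - nra.
  - nra.
Qed.

Lemma df_pos_beyond m r0 x : adm m -> is_r0 n l K m r0 -> r0 <= x -> 0 < df m x.
Proof.
  intros Ha Hr Hx. pose proof (df_root_pos m r0 Ha Hr) as Hp.
  pose proof Hr as [Hr0 _]. pose proof INRn_ge2.
  unfold kdf in *.
  assert (0 < r0 ^ n) by (apply pow_lt; lra).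
  assert (Hxn : r0 ^ n <= x ^ n) by (apply pow_incr; lra).
  assert (0 < l ^ 2) by (apply pow_lt; auto).
  assert (2 * r0 / l ^ 2 <= 2 * x / l ^ 2) by (unfold Rdiv; apply Rmult_le_compat_r; [left; apply Rinv_0_lt_compat; lra| lra]).
  destruct (Rle_or_lt 0 m) as [Hm|Hm].
  - assert (0 < 2 * x / l ^ 2) by (apply Rdiv_lt_0_compat; lra).
    assert (0 <= 2 * (INR n - 1) * m / x ^ n) by (apply Rdiv_le_0_compat; [nra | lra]).
    lra.
  - assert (2 * (INR n - 1) * m / r0 ^ n <= 2 * (INR n - 1) * m / x ^ n).
    { unfold Rdiv. assert (2 * (INR n - 1) * m < 0) by nra.
      assert (/ x ^ n <= / r0 ^ n) by (apply Rinv_le_contravar; lra). nra. }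
    lra.
Qed.

Lemma f_strict_incr m r0 x y : adm m -> is_r0 n l K m r0 -> r0 <= x -> x < y -> f m x < f m y.
Proof.
  intros Ha Hr Hx Hxy. pose proof Hr as [Hr0 _].
  destruct (MVT_cor2 (f m) (df m) x y Hxy) as [c [Hc1 Hc2]].
  - intros c Hc. apply f_deriv. lra.
  - pose proof (df_pos_beyond m r0 c Ha Hr ltac:(lra)). nra.
Qed.


Lemma adm_open mu : adm mu -> exists d, 0 < d /\ forall m, Rabs (m - mu) < d -> adm m.
Proof.
  intros [H1 H2].
  destruct HK as [E|[E|E]].
  - specialize (H2 E). exists (mu - mu_min n l). split; [lra|].
    intros m Hm. apply Rabs_def2 in Hm. split; [intros [E'|E']; rewrite E in E'; discriminate|].
    intros _. lra.
  - assert (0 < mu) by (apply H1; auto). exists mu. split; auto.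
    intros m Hm. apply Rabs_def2 in Hm. split; [intros _; lra|]. intros E'; rewrite E in E'; discriminate.
  - assert (0 < mu) by (apply H1; auto). exists mu. split; auto.
    intros m Hm. apply Rabs_def2 in Hm. split; [intros _; lra|]. intros E'; rewrite E in E'; discriminate.
Qed.

Lemma f_dm m0 x : derivable_pt_lim (fun m => f m x) m0 (- 2 / x ^ (n - 1)).
Proof.
  apply is_derive_Reals. unfold kf.
  set (A := x ^ 2 / l ^ 2 + IZR K). set (P := x ^ (n - 1)). unfold Rdiv.
  set (c := / P). auto_derive; auto. ring.
Qed.

Lemma df_joint m0 x0 : 0 < x0 -> forall eps, 0 < eps -> exists d, 0 < d /\ forall m x, Rabs (m - m0) < d -> Rabs (x - x0) < d -> Rabs (df m x - df m0 x0) < eps.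
Proof.
  intros Hx0 eps Heps. pose proof INRn_ge2.
  destruct (cont_at_of_pt _ _ (df_cont m0 x0 Hx0) (eps / 2)) as [d1 [Hd1 H1]]; [lra|].
  assert (Hq : 0 < (x0 / 2) ^ n) by (apply pow_lt; lra).
  set (d2 := eps * (x0 / 2) ^ n / (4 * INR n)).
  assert (Hd2 : 0 < d2) by (unfold d2; apply Rdiv_lt_0_compat; [apply Rmult_lt_0_compat|]; lra).
  exists (Rmin (Rmin d1 d2) (x0 / 2)). split; [repeat apply Rmin_glb_lt; lra|].
  intros m x Hm Hx.
  assert (Hxa : Rabs (x - x0) < d1) by (eapply Rlt_le_trans; [apply Hx|]; eapply Rle_trans; apply Rmin_l).
  assert (Hma : Rabs (m - m0) < d2) by (eapply Rlt_le_trans; [apply Hm|]; eapply Rle_trans; [apply Rmin_l|apply Rmin_r]).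
  assert (Hxb : Rabs (x - x0) < x0 / 2) by (eapply Rlt_le_trans; [apply Hx|]; apply Rmin_r).
  apply Rabs_def2 in Hxb.
  specialize (H1 x Hxa).
  assert (Hxn : (x0 / 2) ^ n <= x ^ n) by (apply pow_incr; lra).
  assert (E : df m x - df m0 x = 2 * (INR n - 1) * (m - m0) / x ^ n) by (unfold kdf; field; split; [apply pow_nonzero|]; lra).
  assert (H2 : Rabs (df m x - df m0 x) < eps / 2).
  { rewrite E. unfold Rdiv. rewrite Rabs_mult, Rabs_mult, Rabs_inv.
    rewrite (Rabs_pos_eq (2 * (INR n - 1))) by lra.
    rewrite (Rabs_pos_eq (x ^ n)) by lra.
    apply (Rle_lt_trans _ (2 * (INR n - 1) * Rabs (m - m0) * / (x0 / 2) ^ n)).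
    - apply Rmult_le_compat_l; [pose proof (Rabs_pos (m - m0)); nra|].
      apply Rinv_le_contravar; lra.
    - apply (Rmult_lt_reg_r ((x0 / 2) ^ n)); auto.
      rewrite Rmult_assoc, Rinv_l, Rmult_1_r by lra.
      assert (Hd2' : d2 * (4 * INR n) = eps * (x0 / 2) ^ n) by (unfold d2; field; lra).
      assert (0 < (INR n - 1) * (d2 - Rabs (m - m0))) by (apply Rmult_lt_0_compat; lra).
      pose proof (Rabs_pos (m - m0)). nra. }
  replace (df m x - df m0 x0) with ((df m x - df m0 x) + (df m0 x - df m0 x0)) by ring.
  eapply Rle_lt_trans; [apply Rabs_triang|]. lra.
Qed.


Lemma f_shift m m' x : 0 < x -> f m x = f m' x - 2 * (m - m') / x ^ (n - 1).
Proof. intros Hx. unfold kf. field. nzt. Qed.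

Variable R0 : R -> R.
Hypothesis HR0 : forall m, adm m -> is_r0 n l K m (R0 m).
Variable mu : R.
Hypothesis Hmu : adm mu.

Lemma R0_cont : cont_at R0 mu.
Proof.
  intros eps Heps.
  destruct (adm_open mu Hmu) as [da [Hda Hadm]].
  pose proof (HR0 mu Hmu) as Hr. pose proof Hr as [Hx0 [Hf0 _]].
  set (x0 := R0 mu) in *.
  pose proof (df_root_pos mu x0 Hmu Hr) as HF0.
  assert (Hp0 : 0 < x0 ^ (n - 1)) by (apply pow_lt; lra).
  set (c := f mu (x0 + eps)).
  assert (Hc : 0 < c) by (apply (f_pos_beyond mu x0); auto; lra).
  set (du := c * x0 ^ (n - 1) / 2).
  assert (Hdu : 0 < du) by (unfold du; apply Rdiv_lt_0_compat; [apply Rmult_lt_0_compat|]; lra).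
  destruct (f_deriv mu x0 Hx0 (df mu x0 / 2)) as [dd Hdd]; [lra|].
  set (h := - Rmin (Rmin eps dd) x0 / 2).
  assert (Hh0 : 0 < Rmin (Rmin eps dd) x0) by (destruct dd; simpl; repeat apply Rmin_glb_lt; lra).
  assert (Hh1 : Rmin (Rmin eps dd) x0 <= eps) by (eapply Rle_trans; apply Rmin_l).
  assert (Hh2 : Rmin (Rmin eps dd) x0 <= dd) by (eapply Rle_trans; [apply Rmin_l| apply Rmin_r]).
  assert (Hh3 : Rmin (Rmin eps dd) x0 <= x0) by (apply Rmin_r).
  specialize (Hdd h ltac:(unfold h; lra) ltac:(unfold h; rewrite Rabs_left by lra; lra)).
  set (x2 := x0 + h).
  assert (Hx2 : 0 < x2) by (unfold x2, h; lra).
  assert (Hfx2 : f mu x2 < 0).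
  { fold x2 in Hdd. rewrite Hf0, Rminus_0_r in Hdd. apply Rabs_def2 in Hdd.
    assert (0 < f mu x2 / h) by lra.
    assert (Hhn : h < 0) by (unfold h; lra).
    destruct (Rlt_or_le (f mu x2) 0) as [Q|Q]; auto.
    assert (f mu x2 / h <= 0).
    { unfold Rdiv. assert (/ h < 0) by (apply Rinv_lt_0_compat; lra). nra. }
    lra. }
  set (dl := - f mu x2 * x2 ^ (n - 1) / 2).
  assert (Hp2 : 0 < x2 ^ (n - 1)) by (apply pow_lt; lra).
  assert (Hdl : 0 < dl) by (unfold dl; apply Rdiv_lt_0_compat; [apply Rmult_lt_0_compat|]; lra).
  exists (Rmin (Rmin da du) dl). split; [repeat apply Rmin_glb_lt; lra|].
  intros m Hm. apply min3_lt in Hm. destruct Hm as [Hm1 [Hm2 Hm3]].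
  pose proof (Hadm m Hm1) as Ham. pose proof (HR0 m Ham) as Hrm.
  pose proof Hrm as [Hxm [Hfm _]].
  pose proof (Rabs_def2 _ _ Hm2) as Hm2'. pose proof (Rabs_def2 _ _ Hm3) as Hm3'.
  assert (Hup : R0 m < x0 + eps).
  { destruct (Rlt_or_le (R0 m) (x0 + eps)) as [Q|Q]; auto. exfalso.
    assert (Hge : c <= f mu (R0 m)).
    { destruct Q as [Q|Q]; [left; apply (f_strict_incr mu x0); auto; lra| right; unfold c; rewrite Q; auto]. }
    assert (HP : x0 ^ (n - 1) <= R0 m ^ (n - 1)) by (apply pow_incr; lra).
    assert (Hlt : 2 * (m - mu) / R0 m ^ (n - 1) < c).
    { apply div_lt_helper; [lra|]. unfold du in Hm2'. nra. }
    rewrite (f_shift m mu) in Hfm by lra. lra. }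
  assert (Hlow : x2 < R0 m).
  { destruct (Rlt_or_le x2 (R0 m)) as [Q|Q]; auto. exfalso.
    assert (Hneg : f m x2 < 0).
    { rewrite (f_shift m mu) by lra.
      assert (2 * (mu - m) / x2 ^ (n - 1) < - f mu x2).
      { apply div_lt_helper; [lra|]. unfold dl in Hm3'. lra. }
      replace (2 * (m - mu) / x2 ^ (n - 1)) with (- (2 * (mu - m) / x2 ^ (n - 1))) by (field; lra).
      lra. }
    destruct Q as [Q|Q].
    - pose proof (f_pos_beyond m (R0 m) x2 Hrm Q). lra.
    - rewrite Q in Hfm. lra. }
  apply Rabs_def1; unfold x2, h in *; lra.
Qed.


Definition x0 := R0 mu.
Definition F0 := df mu x0.
Definition dR0 := 2 / x0 ^ (n - 1) / F0.

Lemma x0_pos : 0 < x0.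
Proof. destruct (HR0 mu Hmu) as [H _]. exact H. Qed.

Lemma F0_pos : 0 < F0.
Proof. apply df_root_pos; auto. Qed.

Lemma R0_deriv : derivable_pt_lim R0 mu dR0.
Proof.
  pose proof x0_pos as Hx0. pose proof F0_pos as HF0.
  replace dR0 with (- (- 2 / x0 ^ (n - 1)) / df mu (R0 mu)).
  2:{ fold x0. fold F0. unfold dR0. field. split; [apply pow_nonzero|]; lra. }
  apply (IFT (fun m x => f m x) df R0 mu).
  - destruct (adm_open mu Hmu) as [d [Hd Ha]]. exists d; split; auto.
    intros m Hm. destruct (HR0 m (Ha m Hm)) as [_ [H _]]. exact H.
  - apply R0_cont.
  - apply f_dm.
  - exists (x0 / 2). split; [lra|]. intros m x _ Hx. apply Rabs_def2 in Hx.
    apply f_deriv. fold x0 in Hx. lra.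
  - intros eps Heps. apply df_joint; auto.
  - fold x0. fold F0. lra.
Qed.

Definition dF := 2 * dR0 / l ^ 2 + 2 * (INR n - 1) * (x0 ^ n - mu * (INR n * x0 ^ (n - 1) * dR0)) / (x0 ^ n) ^ 2.

Lemma F_deriv : derivable_pt_lim (fun m => df m (R0 m)) mu dF.
Proof.
  pose proof x0_pos as Hx0.
  apply is_derive_Reals. unfold kdf.
  assert (HD : is_derive R0 mu dR0) by (apply is_derive_Reals, R0_deriv).
  auto_derive.
  - split; [exists dR0; exact HD|]. split; [exists dR0; exact HD|]. split; auto.
    apply pow_nonzero. fold x0. lra.
  - replace (Derive (fun x : R => R0 x) mu) with dR0 by (symmetry; apply is_derive_unique; exact HD).
    rewrite <- Nat.sub_1_r. fold x0. unfold dF. field. nzt.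
Qed.


Lemma dF_identity : dF * F0 * x0 ^ n * x0 = 2 * ((INR n + 1) * x0 ^ 2 / l ^ 2 - (INR n - 1) * IZR K).
Proof.
  pose proof x0_pos as Hx0. pose proof F0_pos as HF0.
  destruct (HR0 mu Hmu) as [_ [Hf0 _]]. fold x0 in Hf0.
  pose proof (root_identity mu x0 Hx0 Hf0) as Hm.
  pose proof (df_at_root mu x0 Hx0 Hf0) as Hd. fold F0 in Hd.
  assert (HP : 0 < x0 ^ (n - 1)) by (apply pow_lt; lra).
  set (P := x0 ^ (n - 1)) in *.
  assert (Hm' : mu = P * (x0 ^ 2 / l ^ 2 + IZR K) / 2) by lra.
  assert (HF : F0 = ((INR n + 1) * x0 ^ 2 / l ^ 2 + (INR n - 1) * IZR K) / x0) by (apply (Rmult_eq_reg_r x0); [rewrite Hd; field; lra| lra]).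
  assert (HQ : (INR n + 1) * x0 ^ 2 / l ^ 2 + (INR n - 1) * IZR K <> 0) by (intro Z; rewrite Z in HF; unfold Rdiv in HF; rewrite Rmult_0_l in HF; lra).
  unfold dF, dR0. rewrite (pow_Sn_pred n x0) by lia. fold P.
  rewrite Hm'. rewrite HF. field. repeat split; try lra. intro Z. apply HQ. replace ((INR n + 1) * x0 ^ 2 / l ^ 2 + (INR n - 1) * IZR K) with (((INR n + 1) * x0 ^ 2 + (INR n - 1) * IZR K * l ^ 2) / l ^ 2) by (field; lra). rewrite Z. field. lra.
Qed.


Definition rc := l * sqrt ((INR n - 1) / (INR n + 1)).

Lemma rc_pos : 0 < rc.
Proof.
  pose proof INRn_ge2. unfold rc. apply Rmult_lt_0_compat; auto.
  apply sqrt_lt_R0. apply Rdiv_lt_0_compat; lra.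
Qed.

Lemma rc_sq : rc ^ 2 = l ^ 2 * ((INR n - 1) / (INR n + 1)).
Proof.
  pose proof INRn_ge2. unfold rc. rewrite Rpow_mult_distr. f_equal.
  simpl. rewrite Rmult_1_r. apply sqrt_sqrt. left; apply Rdiv_lt_0_compat; lra.
Qed.

Lemma phi_rc : rc ^ (n - 1) * (rc ^ 2 / l ^ 2 + 1) / 2 = mu_c n l.
Proof.
  pose proof INRn_ge2. unfold mu_c. fold rc. rewrite rc_sq. field. split; lra.
Qed.

Lemma sq_inj a b : 0 < a -> 0 < b -> a ^ 2 = b ^ 2 -> a = b.
Proof.
  intros Ha Hb E. destruct (Rtotal_order a b) as [Q|[Q|Q]]; auto.
  - assert (a ^ 2 < b ^ 2) by (simpl; nra). lra.
  - assert (b ^ 2 < a ^ 2) by (simpl; nra). lra.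
Qed.

Lemma phi_strict a b : 0 < a -> a < b ->
  a ^ (n - 1) * (a ^ 2 / l ^ 2 + 1) < b ^ (n - 1) * (b ^ 2 / l ^ 2 + 1).
Proof.
  intros Ha Hab.
  assert (0 < a ^ (n - 1)) by (apply pow_lt; lra).
  assert (a ^ (n - 1) <= b ^ (n - 1)) by (apply pow_incr; lra).
  assert (0 < l ^ 2) by (apply pow_lt; lra).
  assert (a ^ 2 / l ^ 2 < b ^ 2 / l ^ 2).
  { unfold Rdiv. apply Rmult_lt_compat_r; [apply Rinv_0_lt_compat; lra|]. simpl; nra. }
  assert (0 <= a ^ 2 / l ^ 2) by (apply Rdiv_le_0_compat; [apply pow_le|]; lra).
  nra.
Qed.

Lemma K1_equiv : K = 1%Z -> (mu = mu_c n l <-> x0 = rc).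
Proof.
  intros HK1. pose proof x0_pos. pose proof rc_pos.
  destruct (HR0 mu Hmu) as [_ [Hf0 _]]. fold x0 in Hf0.
  pose proof (root_identity mu x0 H Hf0) as Hm. rewrite HK1 in Hm.
  rewrite <- phi_rc. split.
  - intros E. rewrite E in Hm.
    destruct (Rtotal_order x0 rc) as [Q|[Q|Q]]; auto.
    + pose proof (phi_strict x0 rc H Q). lra.
    + pose proof (phi_strict rc x0 H0 Q). lra.
  - intros E. rewrite <- E. lra.
Qed.

Lemma dF_zero_iff : dF = 0 <-> (K = 1%Z /\ mu = mu_c n l).
Proof.
  pose proof dF_identity as Hid. pose proof x0_pos. pose proof F0_pos. pose proof INRn_ge2.
  assert (0 < x0 ^ n) by (apply pow_lt; lra).
  assert (0 < l ^ 2) by (apply pow_lt; lra).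
  assert (Hs : 0 < x0 ^ 2 / l ^ 2) by (apply Rdiv_lt_0_compat; [apply pow_lt|]; lra).
  split.
  - intros E. rewrite E in Hid. rewrite !Rmult_0_l in Hid.
    destruct HK as [HK1|[HK1|HK1]]; rewrite HK1 in Hid.
    + exfalso. nra.
    + exfalso. nra.
    + split; auto. apply K1_equiv; auto.
      apply sq_inj; [lra| apply rc_pos|]. rewrite rc_sq.
      assert (E2 : (INR n + 1) * (x0 ^ 2 / l ^ 2) = INR n - 1) by lra.
      apply (Rmult_eq_reg_l ((INR n + 1) / l ^ 2)); [|apply Rgt_not_eq, Rdiv_lt_0_compat; lra].
      replace ((INR n + 1) / l ^ 2 * x0 ^ 2) with ((INR n + 1) * (x0 ^ 2 / l ^ 2)) by (field; lra).
      rewrite E2. field. lra.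
  - intros [HK1 Hmc]. apply K1_equiv in Hmc; auto.
    rewrite HK1 in Hid.
    assert (Hx2 : x0 ^ 2 / l ^ 2 = (INR n - 1) / (INR n + 1)) by (rewrite Hmc, rc_sq; field; lra).
    assert (Z : dF * F0 * x0 ^ n * x0 = 0).
    { rewrite Hid. replace ((INR n + 1) * x0 ^ 2 / l ^ 2) with ((INR n + 1) * (x0 ^ 2 / l ^ 2)) by (field; lra).
      rewrite Hx2. field. lra. }
    assert (0 < F0 * x0 ^ n * x0) by (apply Rmult_lt_0_compat; [apply Rmult_lt_0_compat|]; lra).
    nra.
Qed.


Lemma cont_of_deriv g y L : derivable_pt_lim g y L -> cont_at g y.
Proof. intros H. apply cont_at_of_pt. apply derivable_continuous_pt. exists L. exact H. Qed.

Variable Rr : R -> R -> R.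
Hypothesis HRr : forall m, adm m -> forall rho, 0 <= rho ->
  R0 m <= Rr m rho /\ rho ^ 2 = 4 * f m (Rr m rho) / (df m (R0 m)) ^ 2.

Lemma Rr_eq m rho : adm m -> 0 <= rho -> f m (Rr m rho) = rho ^ 2 * (df m (R0 m)) ^ 2 / 4.
Proof.
  intros Ha Hr. destruct (HRr m Ha rho Hr) as [_ E].
  pose proof (df_root_pos m (R0 m) Ha (HR0 m Ha)).
  rewrite E. field. lra.
Qed.

Definition Hrho (rho m x : R) := f m x - rho ^ 2 * (df m (R0 m)) ^ 2 / 4.

Lemma Hrho_dm rho x :
  derivable_pt_lim (fun m => Hrho rho m x) mu (- 2 / x ^ (n - 1) - rho ^ 2 * F0 * dF / 2).
Proof.
  unfold Hrho.
  apply is_derive_Reals.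
  assert (HF : is_derive (fun m => df m (R0 m)) mu dF) by (apply is_derive_Reals, F_deriv).
  assert (Hf : is_derive (fun m => f m x) mu (- 2 / x ^ (n - 1))) by (apply is_derive_Reals, f_dm).
  set (G := fun m => df m (R0 m)) in *. set (Ff := fun m => f m x) in *.
  change (is_derive (fun m => Ff m - rho ^ 2 * G m ^ 2 / 4) mu (- 2 / x ^ (n - 1) - rho ^ 2 * F0 * dF / 2)).
  auto_derive.
  - split; [exists (- 2 / x ^ (n - 1)); exact Hf|]. split; [exists dF; exact HF| auto].
  - replace (Derive (fun x1 : R => Ff x1) mu) with (- 2 / x ^ (n - 1)) by (symmetry; apply is_derive_unique; exact Hf).
    replace (Derive (fun x1 : R => G x1) mu) with dF by (symmetry; apply is_derive_unique; exact HF).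
    unfold G, F0, x0. match goal with |- ?a = ?b => change (@eq R a b) end. unfold Rdiv. set (P := / x ^ (n - 1)). field.
Qed.

Lemma Rr_ge_x0 rho : 0 <= rho -> x0 <= Rr mu rho.
Proof. intros H. destruct (HRr mu Hmu rho H) as [Q _]. exact Q. Qed.

Lemma Rr_cont rho : 0 <= rho -> cont_at (fun m => Rr m rho) mu.
Proof.
  intros Hr.
  apply (root_cont (Hrho rho) R0 (fun m => Rr m rho) mu).
  - destruct (adm_open mu Hmu) as [d [Hd Ha]]. exists d; split; auto.
    intros m Hm. specialize (Ha m Hm). split; [|split].
    + unfold Hrho. rewrite Rr_eq; auto. ring.
    + destruct (HRr m Ha rho Hr); auto.
    + intros x y Hx Hxy. unfold Hrho. pose proof (f_strict_incr m (R0 m) x y Ha (HR0 m Ha) Hx Hxy). lra.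
  - apply R0_cont.
  - intros x. eapply cont_of_deriv. apply Hrho_dm.
Qed.


Definition xr rho := Rr mu rho.
Definition Dr rho := df mu (xr rho).
Definition ur rho := (2 / xr rho ^ (n - 1) + rho ^ 2 * F0 * dF / 2) / Dr rho.

Lemma xr_pos rho : 0 <= rho -> 0 < xr rho.
Proof. intros H. pose proof (Rr_ge_x0 rho H). pose proof x0_pos. unfold xr. lra. Qed.

Lemma Dr_pos rho : 0 <= rho -> 0 < Dr rho.
Proof.
  intros H. unfold Dr. apply (df_pos_beyond mu x0 (xr rho) Hmu (HR0 mu Hmu) (Rr_ge_x0 rho H)).
Qed.

Lemma Rr_deriv rho : 0 <= rho -> derivable_pt_lim (fun m => Rr m rho) mu (ur rho).
Proof.
  intros Hr. pose proof (xr_pos rho Hr) as Hx. pose proof (Dr_pos rho Hr) as HD.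
  replace (ur rho) with (- (- 2 / Rr mu rho ^ (n - 1) - rho ^ 2 * F0 * dF / 2) / df mu (Rr mu rho)).
  2:{ unfold ur, Dr, xr. field. unfold Dr, xr in HD; unfold xr in Hx. nzt. }
  apply (IFT (Hrho rho) df (fun m => Rr m rho) mu).
  - destruct (adm_open mu Hmu) as [d [Hd Ha]]. exists d; split; auto.
    intros m Hm. unfold Hrho. rewrite Rr_eq; auto. ring.
  - apply Rr_cont; auto.
  - apply Hrho_dm.
  - exists (xr rho / 2). split; [lra|]. intros m x _ Hxx. apply Rabs_def2 in Hxx.
    unfold Hrho. apply (dpl_minus_const (fun x => f m x)). apply f_deriv. unfold xr in *. lra.
  - intros eps Heps. apply df_joint; auto.
  - fold (xr rho). fold (Dr rho). lra.
Qed.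

Definition dDr rho := 2 * ur rho / l ^ 2 + 2 * (INR n - 1) * (xr rho ^ n - mu * (INR n * xr rho ^ (n - 1) * ur rho)) / (xr rho ^ n) ^ 2.

Lemma D_deriv rho : 0 <= rho -> derivable_pt_lim (fun m => df m (Rr m rho)) mu (dDr rho).
Proof.
  intros Hr. pose proof (xr_pos rho Hr) as Hx.
  apply is_derive_Reals. unfold kdf.
  assert (HD : is_derive (fun m => Rr m rho) mu (ur rho)) by (apply is_derive_Reals, Rr_deriv; auto).
  set (G := fun m => Rr m rho) in *.
  change (is_derive (fun m => 2 * G m / l ^ 2 + 2 * (INR n - 1) * m / G m ^ n) mu (dDr rho)).
  auto_derive.
  - split; [exists (ur rho); exact HD|]. split; [exists (ur rho); exact HD|]. split; auto.
    apply pow_nonzero. unfold G. unfold xr in Hx. lra.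
  - replace (Derive (fun x : R => G x) mu) with (ur rho) by (symmetry; apply is_derive_unique; exact HD).
    rewrite <- Nat.sub_1_r. unfold dDr. unfold G. fold (xr rho). field. nzt.
Qed.

Definition kN0 rho := 2 * xr rho * ur rho.
Definition kr0 rho := 2 * F0 * dF / Dr rho ^ 2 - 2 * F0 ^ 2 * dDr rho / Dr rho ^ 3.

Lemma gN_deriv rho : 0 <= rho -> derivable_pt_lim (fun m => g_N Rr m rho) mu (kN0 rho).
Proof.
  intros Hr. unfold g_N.
  apply is_derive_Reals.
  assert (HD : is_derive (fun m => Rr m rho) mu (ur rho)) by (apply is_derive_Reals, Rr_deriv; auto).
  set (G := fun m => Rr m rho) in *.
  change (is_derive (fun m => G m ^ 2) mu (kN0 rho)).
  auto_derive.
  - exists (ur rho); exact HD.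
  - replace (Derive (fun x : R => G x) mu) with (ur rho) by (symmetry; apply is_derive_unique; exact HD).
    unfold kN0, G, xr. ring.
Qed.

Lemma grr_deriv rho : 0 <= rho -> derivable_pt_lim (fun m => g_rr n l K R0 Rr m rho) mu (kr0 rho).
Proof.
  intros Hr. pose proof (Dr_pos rho Hr) as HDp. unfold g_rr.
  apply is_derive_Reals.
  assert (HD : is_derive (fun m => df m (Rr m rho)) mu (dDr rho)) by (apply is_derive_Reals, D_deriv; auto).
  assert (HF : is_derive (fun m => df m (R0 m)) mu dF) by (apply is_derive_Reals, F_deriv).
  set (G := fun m => df m (Rr m rho)) in *.
  set (Fm := fun m => df m (R0 m)) in *.
  change (is_derive (fun m => Fm m ^ 2 / G m ^ 2) mu (kr0 rho)).
  auto_derive.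
  - split; [exists dF; exact HF|]. split; [exists (dDr rho); exact HD|]. split; auto.
    unfold G. unfold Dr, xr in HDp. apply Rmult_integral_contrapositive; split; lra.
  - replace (Derive (fun x : R => G x) mu) with (dDr rho) by (symmetry; apply is_derive_unique; exact HD).
    replace (Derive (fun x : R => Fm x) mu) with dF by (symmetry; apply is_derive_unique; exact HF).
    unfold kr0, G, Fm. fold x0. fold F0. fold (xr rho). fold (Dr rho). field. lra.
Qed.


Lemma xr_eq rho : 0 <= rho -> f mu (xr rho) = rho ^ 2 * F0 ^ 2 / 4.
Proof. intros H. unfold xr, F0, x0. apply Rr_eq; auto. Qed.

Lemma f_upper x : x0 <= x -> f mu x <= x ^ 2 / l ^ 2 + 1 + 2 * Rabs mu / x0 ^ (n - 1).
Proof.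
  intros Hx. pose proof x0_pos. pose proof IZRK_bounds.
  assert (0 < x0 ^ (n - 1)) by (apply pow_lt; lra).
  assert (x0 ^ (n - 1) <= x ^ (n - 1)) by (apply pow_incr; lra).
  pose proof (abs_div_le (2 * mu) _ _ H1 H2) as Q.
  rewrite Rabs_mult, (Rabs_pos_eq 2) in Q by lra.
  unfold kf.
  assert (- (2 * mu / x ^ (n - 1)) <= Rabs (2 * mu / x ^ (n - 1))) by (rewrite <- Rabs_Ropp; apply Rle_abs).
  lra.
Qed.

Lemma f_lower x : 1 <= x -> x ^ 2 / l ^ 2 - 1 - 2 * Rabs mu <= f mu x.
Proof.
  intros Hx. pose proof IZRK_bounds.
  assert (1 <= x ^ (n - 1)) by (apply pow_R1_Rle; lra).
  pose proof (abs_div_le (2 * mu) _ _ Rlt_0_1 H0) as Q.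
  rewrite Rabs_mult, (Rabs_pos_eq 2) in Q by lra. rewrite Rdiv_1_r in Q.
  assert (2 * mu / x ^ (n - 1) <= Rabs (2 * mu / x ^ (n - 1))) by apply Rle_abs.
  unfold kf. lra.
Qed.

Lemma rho_bound rho X : 0 <= rho -> xr rho <= X ->
  rho ^ 2 <= 4 * (X ^ 2 / l ^ 2 + 1 + 2 * Rabs mu / x0 ^ (n - 1)) / F0 ^ 2.
Proof.
  intros Hr HX. pose proof (xr_eq rho Hr) as E. pose proof (xr_pos rho Hr). pose proof F0_pos.
  pose proof (f_upper (xr rho) (Rr_ge_x0 rho Hr)).
  assert (xr rho ^ 2 / l ^ 2 <= X ^ 2 / l ^ 2).
  { unfold Rdiv. apply Rmult_le_compat_r; [left; apply Rinv_0_lt_compat, pow_lt; lra|].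
    apply pow_incr; lra. }
  assert (0 < F0 ^ 2) by (apply pow_lt; lra).
  apply le_div_helper; auto. lra.
Qed.

Lemma dens_lower : dF <> 0 -> exists R c, 0 < R /\ 0 < c /\ forall rho, R <= rho ->
  c <= INR n * (2 * ur rho / xr rho) ^ 2 * (rho * (F0 / Dr rho) * xr rho ^ n).
Proof.
  intros HdF. pose proof x0_pos. pose proof F0_pos. pose proof INRn_ge2.
  assert (HadF : 0 < Rabs dF) by (apply Rabs_pos_lt; auto).
  assert (Hl2 : 0 < l ^ 2) by (apply pow_lt; lra).
  assert (Hma : 0 <= Rabs mu) by apply Rabs_pos.
  assert (Hp0 : 0 < x0 ^ (n - 1)) by (apply pow_lt; lra).
  set (X1 := 1 + x0 + l * (2 + 4 * Rabs mu) + 2 * (INR n - 1) * Rabs mu * l ^ 2 + 2 * l * (F0 / Rabs dF + 1)).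
  assert (HFd : 0 < F0 / Rabs dF) by (apply Rdiv_lt_0_compat; lra).
  assert (T1 : 0 <= l * (2 + 4 * Rabs mu)) by (apply Rmult_le_pos; lra).
  assert (T2 : 0 <= 2 * (INR n - 1) * Rabs mu * l ^ 2) by (apply Rmult_le_pos; [apply Rmult_le_pos|]; lra).
  assert (T3 : 0 <= 2 * l * (F0 / Rabs dF + 1)) by (apply Rmult_le_pos; lra).
  set (A := 1 + 2 * Rabs mu / x0 ^ (n - 1)).
  assert (HA : 1 <= A) by (unfold A; assert (0 <= 2 * Rabs mu / x0 ^ (n - 1)) by (apply Rdiv_le_0_compat; lra); lra).
  set (R := 1 + 2 * (X1 / l + A) / F0).
  assert (HX1 : 0 < X1) by (unfold X1; lra).
  assert (HR1 : 0 <= 2 * (X1 / l + A) / F0) by (apply Rdiv_le_0_compat; [assert (0 < X1 / l) by (apply Rdiv_lt_0_compat; lra); lra| lra]).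
  exists R, (INR n * (dF ^ 2 / (9 * F0 ^ 2)) * (F0 * l ^ 2 / 3)).
  split; [unfold R; lra|]. split.
  { assert (HdF2 : 0 < dF ^ 2) by (rewrite <- pow2_abs; apply pow_lt; auto).
    apply Rmult_lt_0_compat; [apply Rmult_lt_0_compat|]; [lra| |].
    - apply Rdiv_lt_0_compat; [auto|]. apply Rmult_lt_0_compat; [lra| apply pow_lt; lra].
    - apply Rdiv_lt_0_compat; [apply Rmult_lt_0_compat|]; lra. }
  intros rho Hrho.
  assert (Hr0 : 0 <= rho) by (unfold R in Hrho; lra).
  pose proof (xr_pos rho Hr0) as Hx. pose proof (Dr_pos rho Hr0) as HD.
  pose proof (Rr_ge_x0 rho Hr0) as Hxx0.
  set (x := xr rho) in *. set (D := Dr rho) in *. set (u := ur rho).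
  assert (HxX : X1 <= x).
  { destruct (Rle_or_lt X1 x) as [Q|Q]; auto. exfalso.
    pose proof (rho_bound rho X1 Hr0 (Rlt_le _ _ Q)) as Hb.
    replace (X1 ^ 2 / l ^ 2 + 1 + 2 * Rabs mu / x0 ^ (n - 1)) with (X1 ^ 2 / l ^ 2 + A) in Hb by (unfold A; ring).
    assert (HRsq : 4 * (X1 ^ 2 / l ^ 2 + A) / F0 ^ 2 < R ^ 2).
    { assert (E : 4 * (X1 ^ 2 / l ^ 2 + A) / F0 ^ 2 = (2 / F0) ^ 2 * ((X1 / l) ^ 2 + A)) by (field; lra).
      rewrite E. assert (0 < X1 / l) by (apply Rdiv_lt_0_compat; lra).
      assert (E2 : 2 * (X1 / l + A) / F0 = (2 / F0) * (X1 / l + A)) by (field; lra).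
      unfold R. rewrite E2.
      assert (0 < 2 / F0) by (apply Rdiv_lt_0_compat; lra).
      assert ((X1 / l) ^ 2 + A <= (X1 / l + A) ^ 2) by nra.
      assert (0 < (2 / F0) ^ 2) by (apply pow_lt; lra).
      assert ((2 / F0) ^ 2 * ((X1 / l) ^ 2 + A) <= ((2 / F0) * (X1 / l + A)) ^ 2).
      { rewrite Rpow_mult_distr. apply Rmult_le_compat_l; lra. }
      assert (0 <= (2 / F0) * (X1 / l + A)) by nra.
      nra. }
    assert (R ^ 2 <= rho ^ 2) by (apply pow_incr; unfold R in *; lra).
    lra. }
  assert (Hx1 : 1 <= x) by (unfold X1 in HxX; lra).
  assert (HxA : l * (2 + 4 * Rabs mu) <= x) by (unfold X1 in HxX; lra).
  assert (HxB : 2 * (INR n - 1) * Rabs mu * l ^ 2 <= x) by (unfold X1 in HxX; lra).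
  assert (HxC : 2 * l * (F0 / Rabs dF + 1) <= x) by (unfold X1 in HxX; lra).
  assert (HP : 1 <= x ^ (n - 1)) by (apply pow_R1_Rle; lra).
  assert (Hxn : x ^ n = x * x ^ (n - 1)) by (apply pow_Sn_pred; lia).
  set (P := x ^ (n - 1)) in *.
  assert (Hfx : x ^ 2 / (2 * l ^ 2) <= f mu x).
  { pose proof (f_lower x Hx1).
    set (t := x / l).
    assert (Ht : 2 + 4 * Rabs mu <= t) by (unfold t; apply le_div_helper; lra).
    assert (E1 : x ^ 2 / l ^ 2 = t * t) by (unfold t; field; lra).
    assert (E2 : x ^ 2 / (2 * l ^ 2) = t * t / 2) by (unfold t; field; lra).
    rewrite E2. rewrite E1 in H2. nra. }
  assert (HD3 : D <= 3 * x / l ^ 2).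
  { unfold D, Dr. fold x. unfold kdf.
    assert (1 <= x ^ n) by (apply pow_R1_Rle; lra).
    pose proof (abs_div_le (2 * (INR n - 1) * mu) _ _ Rlt_0_1 H2) as Q.
    rewrite Rdiv_1_r, !Rabs_mult, (Rabs_pos_eq 2), (Rabs_pos_eq (INR n - 1)) in Q by lra.
    assert (2 * (INR n - 1) * mu / x ^ n <= Rabs (2 * (INR n - 1) * mu / x ^ n)) by apply Rle_abs.
    assert (2 * (INR n - 1) * Rabs mu <= x / l ^ 2) by (apply le_div_helper; lra).
    assert (E : 3 * x / l ^ 2 = 2 * x / l ^ 2 + x / l ^ 2) by (field; lra).
    lra. }
  assert (HuD : u * D = 2 / P + 2 * f mu x * dF / F0).
  { pose proof (xr_eq rho Hr0) as Ex. fold x in Ex. rewrite Ex.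
    unfold u, ur. fold x. fold D. fold P. field. lra. }
  assert (Hfpos : 0 < f mu x) by (assert (0 < x ^ 2 / (2 * l ^ 2)) by (apply Rdiv_lt_0_compat; [apply pow_lt|]; lra); lra).
  assert (Hw : x ^ 2 * Rabs dF / (2 * l ^ 2 * F0) <= Rabs (u * D)).
  { rewrite HuD.
    assert (H2P : 2 / P <= 2) by (apply div_le_helper; lra).
    assert (H2P0 : 0 < 2 / P) by (apply Rdiv_lt_0_compat; lra).
    assert (Ha : Rabs (2 * f mu x * dF / F0) = 2 * f mu x * Rabs dF / F0).
    { unfold Rdiv. rewrite !Rabs_mult, Rabs_inv, (Rabs_pos_eq 2), (Rabs_pos_eq (f mu x)), (Rabs_pos_eq F0) by lra. ring. }
    assert (Hb : x ^ 2 * Rabs dF / (l ^ 2 * F0) <= 2 * f mu x * Rabs dF / F0).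
    { replace (x ^ 2 * Rabs dF / (l ^ 2 * F0)) with (2 * (x ^ 2 / (2 * l ^ 2)) * Rabs dF / F0) by (field; lra).
      unfold Rdiv. apply Rmult_le_compat_r; [left; apply Rinv_0_lt_compat; lra|].
      apply Rmult_le_compat_r; lra. }
    assert (Hc : 2 <= x ^ 2 * Rabs dF / (2 * l ^ 2 * F0)).
    { apply le_div_helper; [apply Rmult_lt_0_compat; lra|].
      set (a := F0 / Rabs dF) in *.
      assert (Ea : F0 = a * Rabs dF) by (unfold a; field; lra).
      assert (x ^ 2 >= 4 * l ^ 2 * (a + 1) ^ 2) by (replace (x ^ 2) with (x * x) by ring; replace (4 * l ^ 2 * (a + 1) ^ 2) with ((2 * l * (a + 1)) * (2 * l * (a + 1))) by ring; nra).
      rewrite Ea. nra. }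
    pose proof (Rabs_triang_inv (2 * f mu x * dF / F0) (- (2 / P))) as Q.
    rewrite Rabs_Ropp, (Rabs_pos_eq (2 / P)) in Q by lra.
    replace (2 * f mu x * dF / F0 - - (2 / P)) with (2 / P + 2 * f mu x * dF / F0) in Q by ring.
    replace (x ^ 2 * Rabs dF / (l ^ 2 * F0)) with (2 * (x ^ 2 * Rabs dF / (2 * l ^ 2 * F0))) in Hb by (field; lra).
    lra. }
  assert (U1' : Rabs dF / (3 * F0) <= Rabs (2 * u / x)).
  { replace (2 * u / x) with (2 * (u * D) / (x * D)) by (field; lra).
    unfold Rdiv at 2. rewrite Rabs_mult, Rabs_mult, Rabs_inv, (Rabs_pos_eq 2), (Rabs_pos_eq (x * D)) by nra.
    fold (Rdiv (2 * Rabs (u * D)) (x * D)).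
    apply le_div_helper; [nra|].
    assert (0 <= Rabs dF / (3 * F0)) by (apply Rdiv_le_0_compat; lra).
    apply (Rle_trans _ (Rabs dF / (3 * F0) * (3 * x * x / l ^ 2))).
    - apply Rmult_le_compat_l; auto.
      replace (3 * x * x / l ^ 2) with (x * (3 * x / l ^ 2)) by (field; lra).
      apply Rmult_le_compat_l; lra.
    - replace (Rabs dF / (3 * F0) * (3 * x * x / l ^ 2)) with (2 * (x ^ 2 * Rabs dF / (2 * l ^ 2 * F0))) by (field; lra).
      lra. }
  assert (U1 : dF ^ 2 / (9 * F0 ^ 2) <= (2 * u / x) ^ 2).
  { rewrite <- (pow2_abs (2 * u / x)).
    replace (dF ^ 2 / (9 * F0 ^ 2)) with ((Rabs dF / (3 * F0)) ^ 2) by (unfold Rdiv; rewrite Rpow_mult_distr, pow2_abs; field; lra).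
    apply pow_incr. split; [apply Rdiv_le_0_compat; [apply Rabs_pos|lra]| auto]. }
  assert (U2 : F0 * l ^ 2 / 3 <= rho * (F0 / D) * x ^ n).
  { assert (Q1 : F0 * l ^ 2 / (3 * x) <= F0 / D).
    { apply le_div_helper; auto.
      apply (Rle_trans _ (F0 * l ^ 2 / (3 * x) * (3 * x / l ^ 2))).
      - apply Rmult_le_compat_l; [apply Rdiv_le_0_compat; nra| auto].
      - right. field. lra. }
    assert (Q2 : x <= x ^ n) by (rewrite Hxn; nra).
    assert (Q3 : 1 <= rho) by (unfold R in Hrho; lra).
    assert (0 <= F0 * l ^ 2 / (3 * x)) by (apply Rdiv_le_0_compat; nra).
    apply (Rle_trans _ (1 * (F0 * l ^ 2 / (3 * x)) * x)).
    - right. field. lra.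
    - apply Rmult_le_compat; [nra| lra| apply Rmult_le_compat; lra| auto]. }
  apply Rmult_le_compat; [| apply Rdiv_le_0_compat; nra | | auto].
  - apply Rmult_le_pos; [lra|]. apply Rdiv_le_0_compat; [apply pow2_ge_0| nra].
  - apply Rmult_le_compat_l; [lra| auto].
Qed.


Definition c3 := Rmin (F0 / x0) (2 / l ^ 2).

Lemma c3_pos : 0 < c3.
Proof.
  pose proof x0_pos. pose proof F0_pos. assert (0 < l ^ 2) by (apply pow_lt; lra).
  unfold c3. apply Rmin_glb_lt; apply Rdiv_lt_0_compat; lra.
Qed.

Lemma D_lin rho : 0 <= rho -> c3 * xr rho <= Dr rho.
Proof.
  intros Hr. pose proof x0_pos. pose proof F0_pos. pose proof INRn_ge2.
  pose proof (xr_pos rho Hr) as Hx. pose proof (Rr_ge_x0 rho Hr) as Hxx. fold (xr rho) in Hxx.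
  assert (Hl2 : 0 < l ^ 2) by (apply pow_lt; lra).
  set (x := xr rho) in *.
  assert (HY0 : 0 < x0 ^ n) by (apply pow_lt; lra).
  assert (HY : x0 ^ n <= x ^ n) by (apply pow_incr; lra).
  unfold Dr. fold x. unfold kdf.
  destruct (Rle_or_lt 0 mu) as [Hm|Hm].
  - assert (c3 <= 2 / l ^ 2) by apply Rmin_r.
    assert (0 <= 2 * (INR n - 1) * mu / x ^ n) by (apply Rdiv_le_0_compat; nra).
    assert (c3 * x <= 2 / l ^ 2 * x) by (apply Rmult_le_compat_r; lra).
    replace (2 * x / l ^ 2) with (2 / l ^ 2 * x) by (field; lra). lra.
  - assert (c3 <= F0 / x0) by apply Rmin_l.
    assert (EF : F0 / x0 = 2 / l ^ 2 + 2 * (INR n - 1) * mu / (x0 * x0 ^ n)).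
    { unfold F0, kdf. fold x0. field. nzt. }
    assert (Hq : 2 * (INR n - 1) * mu / (x0 * x0 ^ n) <= 2 * (INR n - 1) * mu / (x * x ^ n)).
    { unfold Rdiv. assert (2 * (INR n - 1) * mu < 0) by nra.
      assert (/ (x * x ^ n) <= / (x0 * x0 ^ n)).
      { apply Rinv_le_contravar; [nra|]. apply Rmult_le_compat; lra. }
      nra. }
    assert (E : 2 * x / l ^ 2 + 2 * (INR n - 1) * mu / x ^ n = x * (2 / l ^ 2 + 2 * (INR n - 1) * mu / (x * x ^ n))).
    { field. nzt. }
    rewrite E. rewrite (Rmult_comm x (_ + _)). apply Rmult_le_compat_r; lra.
Qed.

Definition A0 := 1 + 2 * Rabs mu / x0 ^ (n - 1).
Definition B0 := 2 * (1 / l + A0) / F0.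

Lemma A0_ge1 : 1 <= A0.
Proof.
  pose proof x0_pos. assert (0 < x0 ^ (n - 1)) by (apply pow_lt; lra).
  assert (0 <= 2 * Rabs mu / x0 ^ (n - 1)) by (apply Rdiv_le_0_compat; [pose proof (Rabs_pos mu)|]; lra).
  unfold A0; lra.
Qed.

Lemma B0_pos : 0 < B0.
Proof.
  pose proof A0_ge1. pose proof F0_pos. unfold B0.
  assert (0 < 1 / l) by (apply Rdiv_lt_0_compat; lra).
  apply Rdiv_lt_0_compat; lra.
Qed.

Lemma rho_lin rho : 0 <= rho -> rho <= B0 * (1 + xr rho).
Proof.
  intros Hr. pose proof (rho_bound rho (xr rho) Hr (Rle_refl _)) as Hb.
  pose proof A0_ge1. pose proof F0_pos. pose proof B0_pos. pose proof (xr_pos rho Hr). pose proof x0_pos.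
  replace (xr rho ^ 2 / l ^ 2 + 1 + 2 * Rabs mu / x0 ^ (n - 1)) with ((xr rho / l) ^ 2 + A0) in Hb by (unfold A0; field; nzt).
  set (x := xr rho) in *.
  assert (0 < 1 / l) by (apply Rdiv_lt_0_compat; lra).
  assert (0 < x / l) by (apply Rdiv_lt_0_compat; lra).
  assert (E : B0 * (1 + x) = (2 / F0) * ((1 / l + A0) * (1 + x))) by (unfold B0; field; lra).
  assert (E2 : 4 * ((x / l) ^ 2 + A0) / F0 ^ 2 = (2 / F0) ^ 2 * ((x / l) ^ 2 + A0)) by (field; lra).
  rewrite E2 in Hb.
  assert (Hk : x / l + A0 <= (1 / l + A0) * (1 + x)).
  { replace ((1 / l + A0) * (1 + x)) with (1 / l + x / l + A0 + A0 * x) by (field; lra). nra. }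
  assert (Hk2 : (x / l) ^ 2 + A0 <= ((1 / l + A0) * (1 + x)) ^ 2).
  { assert ((x / l) ^ 2 + A0 <= (x / l + A0) ^ 2) by nra.
    assert ((x / l + A0) ^ 2 <= ((1 / l + A0) * (1 + x)) ^ 2) by (apply pow_incr; lra). lra. }
  assert (0 < 2 / F0) by (apply Rdiv_lt_0_compat; lra).
  assert (Hsq : rho ^ 2 <= (B0 * (1 + x)) ^ 2).
  { rewrite E, Rpow_mult_distr. eapply Rle_trans; [apply Hb|].
    apply Rmult_le_compat_l; [apply pow_le; lra| auto]. }
  assert (0 <= B0 * (1 + x)) by nra.
  destruct (Rle_or_lt rho (B0 * (1 + x))) as [Q|Q]; auto.
  assert ((B0 * (1 + x)) ^ 2 < rho ^ 2) by (simpl; nra). lra.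
Qed.


Definition densE rho := ((kr0 rho / (F0 ^ 2 / Dr rho ^ 2)) ^ 2 + INR n * (kN0 rho / xr rho ^ 2) ^ 2)
  * (rho * (F0 / Dr rho) * xr rho ^ n).

Lemma sq_le a b : Rabs a <= b -> a ^ 2 <= b ^ 2.
Proof. intros H. rewrite <- pow2_abs. apply pow_incr. split; [apply Rabs_pos| auto]. Qed.

Lemma dens_upper : dF = 0 -> exists C, forall rho, 0 <= rho -> densE rho * (1 + rho) ^ 2 <= C.
Proof.
  intros HdF. pose proof x0_pos. pose proof F0_pos. pose proof INRn_ge2. pose proof c3_pos.
  pose proof B0_pos.
  assert (Hl2 : 0 < l ^ 2) by (apply pow_lt; lra).
  assert (HY0 : 0 < x0 ^ n) by (apply pow_lt; lra).
  set (C4 := 4 / (c3 * l ^ 2) + 2 * (INR n - 1) * (1 + INR n * Rabs mu * (2 / c3) / (x0 * x0 ^ n))).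
  set (q := (1 + B0) * (1 + 1 / x0)).
  exists ((4 * C4 ^ 2 * (1 / c3) ^ 2 + 4 * INR n * (2 / c3) ^ 2) * (F0 * (1 / c3)) * q ^ 3 * (1 / x0 ^ n)).
  intros rho Hr.
  pose proof (xr_pos rho Hr) as Hx. pose proof (Dr_pos rho Hr) as HD.
  pose proof (Rr_ge_x0 rho Hr) as Hxx. fold (xr rho) in Hxx.
  pose proof (D_lin rho Hr) as HDl. pose proof (rho_lin rho Hr) as Hrl.
  unfold densE, kr0, kN0, dDr. rewrite HdF.
  set (x := xr rho) in *. set (D := Dr rho) in *.
  assert (Hxn : x ^ n = x * x ^ (n - 1)) by (apply pow_Sn_pred; lia).
  assert (HP : 0 < x ^ (n - 1)) by (apply pow_lt; lra).
  assert (HYY : x0 ^ n <= x ^ n) by (apply pow_incr; lra).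
  assert (Hu : ur rho = 2 / (x ^ (n - 1) * D)).
  { unfold ur. rewrite HdF. fold x. fold D. field. lra. }
  set (u := ur rho) in *. set (Y := x ^ n) in *. set (P := x ^ (n - 1)) in *.
  set (a2 := u * Y). set (a3 := x / D).
  set (a1 := 2 * a2 / l ^ 2 + 2 * (INR n - 1) * (1 - INR n * mu * a2 / (x * Y))).
  assert (Ha2 : a2 = 2 * a3) by (unfold a2, a3; rewrite Hu, Hxn; field; lra).
  assert (Ha3 : 0 < a3 <= 1 / c3).
  { unfold a3. split; [apply Rdiv_lt_0_compat; lra|].
    apply div_le_helper; auto. replace (1 / c3 * D) with (D / c3) by (field; lra).
    apply le_div_helper; lra. }
  apply (Rle_trans _ ((4 * a1 ^ 2 * a3 ^ 2 + 4 * INR n * a2 ^ 2) * (F0 * a3) * (rho * (1 + rho) ^ 2 / x ^ 3) * (1 / Y))).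
  { right. unfold a1, a2, a3. rewrite Hxn. field. nzt. }
  assert (Ha2b : 0 < a2 <= 2 / c3) by (rewrite Ha2; split; [lra|]; replace (2 / c3) with (2 * (1 / c3)) by (field; lra); lra).
  assert (HxY : x0 * x0 ^ n <= x * Y) by (apply Rmult_le_compat; lra).
  assert (Ha1 : Rabs a1 <= C4).
  { unfold a1, C4. eapply Rle_trans; [apply Rabs_triang|].
    apply Rplus_le_compat.
    - rewrite Rabs_pos_eq by (apply Rdiv_le_0_compat; lra).
      apply div_le_helper; auto. replace (4 / (c3 * l ^ 2) * l ^ 2) with (2 * (2 / c3)) by (field; lra). lra.
    - rewrite Rabs_mult, (Rabs_pos_eq (2 * (INR n - 1))) by lra.
      apply Rmult_le_compat_l; [lra|].
      unfold Rminus. eapply Rle_trans; [apply Rabs_triang|]. rewrite Rabs_R1, Rabs_Ropp.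
      apply Rplus_le_compat_l.
      assert (E : Rabs (INR n * mu * a2 / (x * Y)) = INR n * Rabs mu * a2 / (x * Y)).
      { unfold Rdiv. rewrite !Rabs_mult, Rabs_inv, (Rabs_pos_eq (INR n)), (Rabs_pos_eq a2), (Rabs_pos_eq (x * Y)) by nra. ring. }
      rewrite E. pose proof (Rabs_pos mu).
      unfold Rdiv. apply Rmult_le_compat; [apply Rmult_le_pos; [apply Rmult_le_pos|]; lra| left; apply Rinv_0_lt_compat; nra| |].
      + apply Rmult_le_compat_l; [apply Rmult_le_pos; lra| lra].
      + apply Rinv_le_contravar; nra. }
  assert (Q1 : 4 * a1 ^ 2 * a3 ^ 2 + 4 * INR n * a2 ^ 2 <= 4 * C4 ^ 2 * (1 / c3) ^ 2 + 4 * INR n * (2 / c3) ^ 2).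
  { assert (a1 ^ 2 <= C4 ^ 2) by (apply sq_le; auto).
    assert (a3 ^ 2 <= (1 / c3) ^ 2) by (apply pow_incr; lra).
    assert (a2 ^ 2 <= (2 / c3) ^ 2) by (apply pow_incr; lra).
    assert (0 <= a1 ^ 2) by apply pow2_ge_0. assert (0 <= a3 ^ 2) by apply pow2_ge_0.
    assert (a1 ^ 2 * a3 ^ 2 <= C4 ^ 2 * (1 / c3) ^ 2) by (apply Rmult_le_compat; lra).
    nra. }
  assert (Hq1 : 1 + 1 / x <= 1 + 1 / x0).
  { assert (1 / x <= 1 / x0) by (unfold Rdiv; rewrite !Rmult_1_l; apply Rinv_le_contravar; lra). lra. }
  assert (H1x : 0 < 1 / x) by (apply Rdiv_lt_0_compat; lra).
  assert (Q3a : rho / x <= q).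
  { apply div_le_helper; auto. unfold q.
    apply (Rle_trans _ (B0 * (1 + x))); auto.
    replace (B0 * (1 + x)) with (B0 * (1 + 1 / x) * x) by (field; lra).
    apply Rmult_le_compat_r; [lra|]. nra. }
  assert (Q3b : (1 + rho) / x <= q).
  { apply div_le_helper; auto. unfold q.
    apply (Rle_trans _ ((1 + B0) * (1 + 1 / x) * x)).
    - replace ((1 + B0) * (1 + 1 / x) * x) with (1 + x + B0 * (1 + x)) by (field; lra). lra.
    - apply Rmult_le_compat_r; [lra|]. apply Rmult_le_compat_l; lra. }
  assert (Q3 : rho * (1 + rho) ^ 2 / x ^ 3 <= q ^ 3).
  { replace (rho * (1 + rho) ^ 2 / x ^ 3) with ((rho / x) * ((1 + rho) / x) ^ 2) by (field; lra).
    assert (0 <= rho / x) by (apply Rdiv_le_0_compat; lra).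
    assert (0 <= (1 + rho) / x) by (apply Rdiv_le_0_compat; lra).
    assert (((1 + rho) / x) ^ 2 <= q ^ 2) by (apply pow_incr; lra).
    replace (q ^ 3) with (q * q ^ 2) by ring.
    apply Rmult_le_compat; auto. apply pow2_ge_0. }
  assert (Q4 : 1 / Y <= 1 / x0 ^ n) by (unfold Rdiv; rewrite !Rmult_1_l; apply Rinv_le_contravar; lra).
  assert (0 <= rho * (1 + rho) ^ 2 / x ^ 3) by (apply Rdiv_le_0_compat; [apply Rmult_le_pos; [lra| apply pow2_ge_0]| apply pow_lt; lra]).
  assert (0 <= 1 / Y) by (apply Rdiv_le_0_compat; lra).
  assert (0 <= 4 * a1 ^ 2 * a3 ^ 2 + 4 * INR n * a2 ^ 2) by (pose proof (pow2_ge_0 a1); pose proof (pow2_ge_0 a3); pose proof (pow2_ge_0 a2); nra).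
  apply Rmult_le_compat; [| auto | | auto].
  - apply Rmult_le_pos; [apply Rmult_le_pos; [auto| nra]| auto].
  - apply Rmult_le_compat; [apply Rmult_le_pos; [auto| nra]| auto | | auto].
    apply Rmult_le_compat; [auto| nra| auto| ].
    apply Rmult_le_compat_l; lra.
Qed.



Lemma xt_cont r : continuity_pt (fun y => Rr mu (Rabs y)) r.
Proof.
  apply pt_of_cont_at.
  apply (root_cont (fun y x => f mu x - y ^ 2 * F0 ^ 2 / 4) (fun _ => x0) (fun y => Rr mu (Rabs y)) r).
  - exists 1. split; [lra|]. intros y _. split; [|split].
    + pose proof (xr_eq (Rabs y) (Rabs_pos y)) as E. unfold xr in E. rewrite E, pow2_abs. ring.
    + apply Rr_ge_x0, Rabs_pos.
    + intros a b Ha Hab. pose proof (f_strict_incr mu x0 a b Hmu (HR0 mu Hmu) Ha Hab). lra.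
  - intros eps Heps. exists 1. split; [lra|]. intros. rewrite Rminus_diag, Rabs_R0. lra.
  - intros x. apply cont_at_of_pt. cpt_auto. lra.
Qed.

Definition densT rho := densE (Rabs rho).

Lemma densT_cont r : continuity_pt densT r.
Proof.
  pose proof (xt_cont r) as Hc.
  pose proof (xr_pos (Rabs r) (Rabs_pos r)) as Hx. pose proof (Dr_pos (Rabs r) (Rabs_pos r)) as HD.
  pose proof F0_pos. pose proof x0_pos.
  unfold xr in Hx. unfold Dr, xr, kdf in HD.
  unfold densT, densE, kr0, kN0, dDr, ur, Dr, xr, kdf.
  cpt_auto.
  all: apply Rgt_not_eq; repeat first [apply Rdiv_lt_0_compat | apply Rmult_lt_0_compat | apply pow_lt | assumption | lra].
Qed.


Lemma densE_nonneg rho : 0 <= rho -> 0 <= densE rho.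
Proof.
  intros Hr. pose proof (xr_pos rho Hr). pose proof (Dr_pos rho Hr). pose proof F0_pos. pose proof INRn_ge2.
  unfold densE. apply Rmult_le_pos.
  - pose proof (pow2_ge_0 (kr0 rho / (F0 ^ 2 / Dr rho ^ 2))). pose proof (pow2_ge_0 (kN0 rho / xr rho ^ 2)). nra.
  - apply Rmult_le_pos; [apply Rmult_le_pos; [lra| apply Rdiv_le_0_compat; lra]| apply pow_le; lra].
Qed.

Lemma dens_eq (kr kN : R -> R) :
  (forall rho, 0 <= rho ->
     derivable_pt_lim (fun m => g_rr n l K R0 Rr m rho) mu (kr rho) /\
     derivable_pt_lim (fun m => g_N Rr m rho) mu (kN rho)) ->
  forall rho, 0 <= rho -> L2_density n l K R0 Rr mu kr kN rho = densE rho.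
Proof.
  intros Hd rho Hr. destruct (Hd rho Hr) as [H1 H2]. unfold L2_density.
  rewrite (uniqueness_limite _ _ _ _ H1 (grr_deriv rho Hr)).
  rewrite (uniqueness_limite _ _ _ _ H2 (gN_deriv rho Hr)).
  pose proof (Dr_pos rho Hr). pose proof F0_pos.
  unfold L2_density, densE.
  change (g_rr n l K R0 Rr mu rho) with (F0 ^ 2 / Dr rho ^ 2).
  change (g_N Rr mu rho) with (xr rho ^ 2).
  replace (sqrt (F0 ^ 2 / Dr rho ^ 2)) with (F0 / Dr rho).
  - reflexivity.
  - replace (F0 ^ 2 / Dr rho ^ 2) with ((F0 / Dr rho) ^ 2) by (field; lra).
    rewrite sqrt_pow2; auto. apply Rdiv_le_0_compat; lra.
Qed.

Lemma L2_of_dF0 : dF = 0 -> finite_integral_0_inf densE.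
Proof.
  intros HdF. destruct (dens_upper HdF) as [C HC].
  assert (HC0 : 0 <= C) by (pose proof (HC 0 (Rle_refl 0)); pose proof (densE_nonneg 0 (Rle_refl 0)); nra).
  apply (fi_ext densT densE).
  { intros x Hx. unfold densT. rewrite Rabs_pos_eq; auto. }
  split.
  - intros b Hb. constructor. apply continuity_implies_RiemannInt; auto. intros; apply densT_cont.
  - exists C. intros b pr Hb.
    assert (prg : Riemann_integrable (fun t => C / (1 + t) ^ 2) 0 b).
    { apply continuity_implies_RiemannInt; auto. intros x Hx.
      apply cpt_div; [apply cpt_const| apply cpt_pow; apply cpt_plus; [apply cpt_const| apply cpt_id]|].
      apply pow_nonzero. lra. }
    apply (Rle_trans _ (RiemannInt prg)); [|apply int_inv_sq; auto].
    apply RiemannInt_P19; auto. intros x Hx. unfold densT. rewrite Rabs_pos_eq by lra.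
    apply le_div2; [apply pow_lt; lra| apply HC; lra].
Qed.

Lemma notL2_of_dF : dF <> 0 -> ~ finite_integral_0_inf densE.
Proof.
  intros HdF [Hint [C HC]].
  destruct (dens_lower HdF) as [R [c [HR [Hc Hlow]]]].
  assert (Hge : forall rho, R <= rho -> c <= densE rho).
  { intros rho Hr. apply (Rle_trans _ _ _ (Hlow rho Hr)).
    assert (Hr0 : 0 <= rho) by lra.
    pose proof (xr_pos rho Hr0). pose proof (Dr_pos rho Hr0). pose proof F0_pos.
    unfold densE.
    replace (kN0 rho / xr rho ^ 2) with (2 * ur rho / xr rho) by (unfold kN0; field; lra).
    assert (0 <= rho * (F0 / Dr rho) * xr rho ^ n) by (apply Rmult_le_pos; [apply Rmult_le_pos; [lra| apply Rdiv_le_0_compat; lra]| apply pow_le; lra]).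
    set (A := kr0 rho / (F0 ^ 2 / Dr rho ^ 2)). set (B := 2 * ur rho / xr rho). set (W := rho * (F0 / Dr rho) * xr rho ^ n) in *.
    assert (0 <= A ^ 2 * W) by (apply Rmult_le_pos; [apply pow2_ge_0| auto]).
    replace ((A ^ 2 + INR n * B ^ 2) * W) with (A ^ 2 * W + INR n * B ^ 2 * W) by ring. lra. }
  set (b := R + (Rabs C + 1) / c + 1).
  assert (HCa : 0 <= Rabs C) by apply Rabs_pos.
  assert (Hq : 0 < (Rabs C + 1) / c) by (apply Rdiv_lt_0_compat; lra).
  assert (Hb : 0 <= b) by (unfold b; lra).
  destruct (Hint b Hb) as [pr].
  pose proof (HC b pr Hb) as Hle.
  assert (HRb : 0 <= R <= b) by (unfold b; lra).
  pose proof (RiemannInt_P22 pr HRb) as pr1.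
  pose proof (RiemannInt_P23 pr HRb) as pr2.
  rewrite <- (RiemannInt_P26 pr1 pr2 pr) in Hle.
  assert (I1 : 0 <= RiemannInt pr1).
  { assert (pz : Riemann_integrable (fun _ => 0) 0 R) by (apply continuity_implies_RiemannInt; [lra| intros; apply cpt_const]).
    assert (E : RiemannInt pz = 0) by (rewrite RiemannInt_const; ring).
    apply (Rle_trans _ (RiemannInt pz)); [lra|]. apply RiemannInt_P19; [lra|]. intros x Hx. apply densE_nonneg; lra. }
  assert (I2 : c * (b - R) <= RiemannInt pr2).
  { assert (pc : Riemann_integrable (fun _ => c) R b) by (apply continuity_implies_RiemannInt; [lra| intros; apply cpt_const]).
    rewrite <- (RiemannInt_const c R b pc). apply RiemannInt_P19; [lra|]. intros x Hx. apply Hge; lra. }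
  assert (E3 : c * (b - R) = Rabs C + 1 + c) by (unfold b; field; lra).
  pose proof (Rle_abs C). lra.
Qed.


Lemma main_inner :
  (exists dF', derivable_pt_lim (fun m => kdf n l K m (R0 m)) mu dF') /\
  (exists kr kN : R -> R, forall rho, 0 <= rho ->
      derivable_pt_lim (fun m => g_rr n l K R0 Rr m rho) mu (kr rho) /\
      derivable_pt_lim (fun m => g_N Rr m rho) mu (kN rho)) /\
  (forall (dF' : R) (kr kN : R -> R),
      derivable_pt_lim (fun m => kdf n l K m (R0 m)) mu dF' ->
      (forall rho, 0 <= rho ->
         derivable_pt_lim (fun m => g_rr n l K R0 Rr m rho) mu (kr rho) /\
         derivable_pt_lim (fun m => g_N Rr m rho) mu (kN rho)) ->
      (variation_in_L2 n l K R0 Rr mu kr kN <-> dF' = 0) /\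
      (dF' = 0 <-> (K = 1%Z /\ mu = mu_c n l)) /\
      (K = 1%Z -> (mu = mu_c n l <-> R0 mu = l * sqrt ((INR n - 1) / (INR n + 1)))) /\
      ((K = 0%Z \/ K = (-1)%Z) -> ~ variation_in_L2 n l K R0 Rr mu kr kN)).
Proof.
  split; [exists dF; exact F_deriv|].
  split; [exists kr0, kN0; intros rho Hr; split; [apply grr_deriv| apply gN_deriv]; auto|].
  intros dF' kr kN HdF' Hd.
  rewrite (uniqueness_limite _ _ _ _ HdF' F_deriv).
  assert (Hiff : variation_in_L2 n l K R0 Rr mu kr kN <-> finite_integral_0_inf densE).
  { unfold variation_in_L2, finite_integral_0_inf. split; apply fi_ext.
    - intros x Hx. apply dens_eq; auto.
    - intros x Hx. symmetry. apply dens_eq; auto. }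
  assert (H1 : variation_in_L2 n l K R0 Rr mu kr kN <-> dF = 0).
  { rewrite Hiff. split.
    - intros H. destruct (Req_dec dF 0) as [E|E]; auto. exfalso. apply (notL2_of_dF E H).
    - apply L2_of_dF0. }
  split; [exact H1|]. split; [apply dF_zero_iff|]. split.
  - intros HK1. apply K1_equiv; auto.
  - intros HK0 HL. apply H1 in HL. apply dF_zero_iff in HL. destruct HL as [E _].
    destruct HK0 as [E'|E']; rewrite E in E'; discriminate.
Qed.

End Kottler.

Theorem mainTheorem3 (n : nat) (l : R) (K : Z) (mu : R)
  (R0 : R -> R) (Rr : R -> R -> R) :
  (2 <= n)%nat -> 0 < l -> (K = (-1)%Z \/ K = 0%Z \/ K = 1%Z) ->
  admissible n l K mu ->
  (forall m, admissible n l K m -> is_r0 n l K m (R0 m)) ->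
  (forall m, admissible n l K m -> forall rho, 0 <= rho ->
      R0 m <= Rr m rho /\
      rho ^ 2 = 4 * kf n l K m (Rr m rho) / (kdf n l K m (R0 m)) ^ 2) ->
  (exists dF, derivable_pt_lim (fun m => kdf n l K m (R0 m)) mu dF) /\
  (exists kr kN : R -> R, forall rho, 0 <= rho ->
      derivable_pt_lim (fun m => g_rr n l K R0 Rr m rho) mu (kr rho) /\
      derivable_pt_lim (fun m => g_N Rr m rho) mu (kN rho)) /\
  (forall (dF : R) (kr kN : R -> R),
      derivable_pt_lim (fun m => kdf n l K m (R0 m)) mu dF ->
      (forall rho, 0 <= rho ->
         derivable_pt_lim (fun m => g_rr n l K R0 Rr m rho) mu (kr rho) /\
         derivable_pt_lim (fun m => g_N Rr m rho) mu (kN rho)) ->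
      (variation_in_L2 n l K R0 Rr mu kr kN <-> dF = 0) /\
      (dF = 0 <-> (K = 1%Z /\ mu = mu_c n l)) /\
      (K = 1%Z -> (mu = mu_c n l <-> R0 mu = l * sqrt ((INR n - 1) / (INR n + 1)))) /\
      ((K = 0%Z \/ K = (-1)%Z) -> ~ variation_in_L2 n l K R0 Rr mu kr kN)).
Proof.
  intros Hn Hl HK Hmu HR0 HRr.
  exact (main_inner n l K Hn Hl HK R0 HR0 mu Hmu Rr HRr).
Qed.
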